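(* Assume product-form weights $w^t_i=u(i)v(m_t)$. For each $t\ge1$ let $c_t\in[1,2]$ and set $\beta^c_t:=\beta^*_t/c_t$, with $\beta^c_0=\beta^*_0\in(0,\infty)$. Then for every $x_{1:n}\in\mathcal X^n$ ($n\ge1$), $$R^{\vec\beta^c}_S(x_{1:n}) \le R^{\vec\beta^*}_S(x_{1:n}) + (m-1)\ln2 ,$$ and hence $$R^{\vec\beta^c}_S(x_{1:n}) \le \mathrm{CL}_w(\mathcal A) - (m-1)\ln m + \sum_{j\in\mathcal A}\tfrac12\ln n_j - \tfrac12\ln n + \tfrac32 m\ln\ln\frac{2n}{m} + 2.33m + 0.86 + (m-1)\ln 2.$$
   Context: Let $\mathcal X$ be a finite base alphabet. For $x_{1:n}\in\mathcal X^n$, $n_i$ is the number of occurrences of $i$, $\mathcal A=\{x_1,\dots,x_n\}$, $m=|\mathcal A|$; for $0\le t\le n$, $\mathcal A_t=\{x_1,\dots,x_t\}$ ($\mathcal A_0=\emptyset$), $m_t=|\mathcal A_t|$, $n^t_i$ the count of $i$ in $x_{1:t}$. Product-form weights: $u:\mathcal X\to(0,\infty)$, $v:\{0,1,\dots\}\to(0,\infty)$ with $w^t_i:=u(i)v(m_t)$ and $\sum_{k\in\mathcal X\setminus\mathcal A_t}w^t_k\le1$. For a sequence $\vec\beta=(\beta_0,\beta_1,\dots)$ of positive reals, $S^{\vec\beta}(x_{t+1}=i\mid x_{1:t})=n^t_i/(t+\beta_t)$ if $n^t_i>0$ and $\beta_t w^t_i/(t+\beta_t)$ if $n^t_i=0$,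 $S^{\vec\beta}(x_{1:n})=\prod_{t=0}^{n-1}S^{\vec\beta}(x_{t+1}\mid x_{1:t})$, and $R^{\vec\beta}_S(x_{1:n}):=\ln\big(n^{-n}\prod_{j\in\mathcal A}n_j^{n_j}\big)-\ln S^{\vec\beta}(x_{1:n})$. $\vec\beta^*$ is given by $\beta^*_t:=m_t/\ln\frac{t+1}{m_t}$ for $t\ge1$ and any $\beta^*_0\in(0,\infty)$. $\mathrm{CL}_w(\mathcal A):=\sum_{t\in\{0,\dots,n-1\}:\,x_{t+1}\notin\mathcal A_t}\ln(1/w^t_{x_{t+1}})$. Natural logarithms. *)

(* Defs.v *)
From Stdlib Require Import Reals List.
Import ListNotations.
Open Scope R_scope.

Section Seqs.
Variable X : Type.
Variable eq_dec : forall a b : X, {a = b} + {a <> b}.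

Definition cnt (p : list X) (i : X) : nat := count_occ eq_dec p i.

Definition mdist (p : list X) : nat := length (nodup eq_dec p).

Variables (u : X -> R) (v : nat -> R).

Definition wt (p : list X) (i : X) : R := u i * v (mdist p).

(* S^beta(x_{t+1} = i | x_{1:t}), with p = x_{1:t}, t = length p *)
Definition Scond (beta : nat -> R) (p : list X) (i : X) : R :=
  let t := length p in
  if (0 <? cnt p i)%nat
  then INR (cnt p i) / (INR t + beta t)
  else beta t * wt p i / (INR t + beta t).

Fixpoint Saux (beta : nat -> R) (p rest : list X) : R :=
  match rest with
  | [] => 1
  | a :: r => Scond beta p a * Saux beta (p ++ [a]) r
  end.

Definition Sprob (beta : nat -> R) (xs : list X) : R := Saux beta [] xs.

Definition ML (xs : list X) : R :=
  ln (/ (INR (length xs)) ^ (length xs) *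
      fold_right (fun j acc => INR (cnt xs j) ^ (cnt xs j) * acc) 1
                 (nodup eq_dec xs)).

Definition regret (beta : nat -> R) (xs : list X) : R :=
  ML xs - ln (Sprob beta xs).

Definition betastar (b0 : R) (xs : list X) (t : nat) : R :=
  match t with
  | O => b0
  | S _ => INR (mdist (firstn t xs)) /
           ln ((INR t + 1) / INR (mdist (firstn t xs)))
  end.

Definition betac (b0 : R) (c : nat -> R) (xs : list X) (t : nat) : R :=
  match t with
  | O => b0
  | S _ => betastar b0 xs t / c t
  end.

Fixpoint CLaux (p rest : list X) : R :=
  match rest with
  | [] => 0
  | a :: r =>
      (if in_dec eq_dec a p then 0 else ln (/ wt p a)) + CLaux (p ++ [a]) r
  end.

Definition CL (xs : list X) : R := CLaux [] xs.

Definition sum_half_ln_counts (xs : list X) : R :=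
  fold_right (fun j acc => / 2 * ln (INR (cnt xs j)) + acc) 0
             (nodup eq_dec xs).

Definition unseen_weight (enumX : list X) (p : list X) : R :=
  fold_right (fun k acc => (if in_dec eq_dec k p then 0 else wt p k) + acc) 0
             enumX.

End Seqs.

(* Main.v *)
Require Import Defs.
From Stdlib Require Import Reals List.
From Stdlib Require Import Lra Psatz Lia Arith Permutation.
From Coquelicot Require Coquelicot.
Open Scope R_scope.

Module An.
Import Coquelicot.Coquelicot.
Open Scope R_scope.

Lemma mvt_nonneg (f f' : R -> R) (a b : R) :
  a <= b ->
  (forall c, a <= c <= b -> is_derive f c (f' c)) ->
  (forall c, a <= c <= b -> 0 <= f' c) -> f a <= f b.
Proof.
  intros hab hd hp. destruct (Req_dec a b) as [->|hne]; [lra|].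
  destruct (MVT_cor2 f f' a b) as [c [h1 h2]]; [lra| |].
  - intros c hc. apply is_derive_Reals. now apply hd.
  - assert (0 <= f' c) by (apply hp; lra). nra.
Qed.

Lemma series_lo (x : R) : 0 <= x < 1 ->
  2*x + 2*x^3/3 <= ln (1+x) - ln (1-x).
Proof.
  intros hx.
  set (f := fun t => ln (1+t) - ln (1-t) - (2*t + 2*t^3/3)).
  assert (f 0 <= f x).
  { apply (mvt_nonneg f (fun t => 2*t^4/(1-t^2)) 0 x); [lra| |].
    - intros c hc. unfold f. auto_derive; [lra|]. field. split; try lra. nra.
    - intros c hc. apply Rmult_le_pos; [nra|]. apply Rlt_le, Rinv_0_lt_compat. nra. }
  unfold f in H. rewrite Rplus_0_r, Rminus_0_r, ln_1 in H. lra.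
Qed.

Lemma series_hi (x : R) : 0 <= x < 1 ->
  ln (1+x) - ln (1-x) <= 2*x + 2*x^3/(3*(1-x^2)).
Proof.
  intros hx.
  set (f := fun t => 2*t + 2*t^3/(3*(1-t^2)) - (ln (1+t) - ln (1-t))).
  assert (f 0 <= f x).
  { apply (mvt_nonneg f (fun t => 4*t^4/(3*(1-t^2)^2)) 0 x); [lra| |].
    - intros c hc. unfold f. auto_derive; [repeat split; try lra; nra|].
      field. repeat split; try lra; nra.
    - intros c hc. apply Rmult_le_pos; [nra|]. apply Rlt_le, Rinv_0_lt_compat.
      assert (0 < 1 - c^2) by nra. nra. }
  unfold f in H. rewrite Rplus_0_r, Rminus_0_r, ln_1 in H.
  replace (2*0 + 2*0^3/(3*(1-0^2))) with 0 in H by field. lra.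
Qed.

Lemma ln_as_series (z : R) : 0 < z -> ln z = ln (1 + (z-1)/(z+1)) - ln (1 - (z-1)/(z+1)).
Proof.
  intros hz. rewrite <- ln_div.
  - f_equal. field. split; lra.
  - assert (0 < (z-1)/(z+1) + 1 ) ; [| ].
    { replace ((z-1)/(z+1)+1) with (2*z/(z+1)) by (field; lra).
      apply Rdiv_lt_0_compat; lra. }
    lra.
  - replace (1 - (z-1)/(z+1)) with (2/(z+1)) by (field; lra).
    apply Rdiv_lt_0_compat; lra.
Qed.

Lemma ln_lo (z : R) : 1 <= z -> let x := (z-1)/(z+1) in 2*x + 2*x^3/3 <= ln z.
Proof.
  intros hz x. rewrite ln_as_series by lra. apply series_lo. unfold x. split.
  - apply Rdiv_le_0_compat; lra.
  - apply Rmult_lt_reg_r with (z+1); [lra|]. unfold Rdiv. rewrite Rmult_assoc, Rinv_l; lra.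
Qed.

Lemma ln_hi (z : R) : 1 <= z -> let x := (z-1)/(z+1) in ln z <= 2*x + 2*x^3/(3*(1-x^2)).
Proof.
  intros hz x. rewrite ln_as_series by lra. apply series_hi. unfold x. split.
  - apply Rdiv_le_0_compat; lra.
  - apply Rmult_lt_reg_r with (z+1); [lra|]. unfold Rdiv. rewrite Rmult_assoc, Rinv_l; lra.
Qed.

Lemma ln_le_sub1 (z : R) : 0 < z -> ln z <= z - 1.
Proof.
  intros hz. destruct (Req_dec z 1) as [->|hne]; [rewrite ln_1; lra|].
  assert (h := exp_ineq1 (ln z)).
  rewrite exp_ln in h by lra.
  destruct (Req_dec (ln z) 0) as [e|e]; [rewrite <- ln_1 in e; apply ln_inv in e; lra|]. specialize (h e). lra.
Qed.

Lemma ln_ge_1minv (z : R) : 0 < z -> 1 - /z <= ln z.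
Proof.
  intros hz. assert (h := ln_le_sub1 (/z) (Rinv_0_lt_compat _ hz)).
  rewrite ln_Rinv in h by lra. lra.
Qed.

Lemma ln2_bounds : 0.6929 <= ln 2 <= 0.6933.
Proof.
  replace 2 with ((4/3)*(3/2)) by field.
  rewrite ln_mult by lra.
  pose proof (ln_lo (4/3)) as a1. pose proof (ln_hi (4/3)) as a2.
  pose proof (ln_lo (3/2)) as b1. pose proof (ln_hi (3/2)) as b2.
  cbv zeta in *.
  specialize (a1 ltac:(lra)); specialize (a2 ltac:(lra)); specialize (b1 ltac:(lra)); specialize (b2 ltac:(lra)).
  replace ((4/3-1)/(4/3+1)) with (1/7) in * by field.
  replace ((3/2-1)/(3/2+1)) with (1/5) in * by field.
  replace (2 * (1 / 7) + 2 * (1 / 7) ^ 3 / 3) with (296/1029) in * by field.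
  replace (2 * (1 / 7) + 2 * (1 / 7) ^ 3 / (3 * (1 - (1 / 7) ^ 2))) with (2*(1/7) + 2/(3*7*48)) in * by field.
  replace (2 * (1 / 5) + 2 * (1 / 5) ^ 3 / 3) with (152/375) in * by field.
  replace (2 * (1 / 5) + 2 * (1 / 5) ^ 3 / (3 * (1 - (1 / 5) ^ 2))) with (2*(1/5) + 2/(3*5*24)) in * by field.
  lra.
Qed.

Lemma ln_succ_diff (k : R) : 0 < k -> ln (k+1) - ln k = ln (1 + 1/k).
Proof. intros hk. rewrite <- ln_div by lra. f_equal. field. lra. Qed.

Lemma stir_hi (k : R) : 0 < k -> (k + /2) * ln (1 + 1/k) <= 1 + 1/(12*k*(k+1)).
Proof.
  intros hk. pose proof (ln_hi (1+1/k)) as h. cbv zeta in h.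
  assert (0 < 1/k) by (apply Rdiv_lt_0_compat; lra).
  specialize (h ltac:(lra)).
  replace ((1 + 1 / k - 1) / (1 + 1 / k + 1)) with (1/(2*k+1)) in h by (field; lra).
  apply Rle_trans with ((k + /2) * (2 * (1 / (2 * k + 1)) + 2 * (1 / (2 * k + 1)) ^ 3 / (3 * (1 - (1 / (2 * k + 1)) ^ 2)))).
  - apply Rmult_le_compat_l; lra.
  - right. field. repeat split; try lra; nra.
Qed.

Lemma stir_lo (k : R) : 0 < k -> 1 <= (k + /2) * ln (1 + 1/k).
Proof.
  intros hk. pose proof (ln_lo (1+1/k)) as h. cbv zeta in h.
  assert (0 < 1/k) by (apply Rdiv_lt_0_compat; lra).
  specialize (h ltac:(lra)).
  replace ((1 + 1 / k - 1) / (1 + 1 / k + 1)) with (1/(2*k+1)) in h by (field; lra).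
  apply Rle_trans with ((k + /2) * (2 * (1 / (2 * k + 1)) + 2 * (1 / (2 * k + 1)) ^ 3 / 3)).
  - replace ((k + / 2) * (2 * (1 / (2 * k + 1)) + 2 * (1 / (2 * k + 1)) ^ 3 / 3))
      with (1 + 1/(3*(2*k+1)^2)) by (field; lra).
    assert (0 <= 1/(3*(2*k+1)^2)) by (apply Rlt_le, Rdiv_lt_0_compat; nra). lra.
  - apply Rmult_le_compat_l; lra.
Qed.

Lemma ln_lo1 (z : R) : 1 <= z -> 2*((z-1)/(z+1)) <= ln z.
Proof.
  intros hz. pose proof (ln_lo z hz) as h. cbv zeta in h.
  assert (0 <= (z-1)/(z+1)) by (apply Rdiv_le_0_compat; lra).
  assert (0 <= 2*((z-1)/(z+1))^3/3) by (apply Rmult_le_pos; [apply Rmult_le_pos; [lra|apply pow_le; lra]|lra]).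
  lra.
Qed.

Lemma ln_pos_gt1 (z : R) : 1 < z -> 0 < ln z.
Proof. intros. rewrite <- ln_1. apply ln_increasing; lra. Qed.

Lemma ln_le_mono (a b : R) : 0 < a -> a <= b -> ln a <= ln b.
Proof. intros ha hab. destruct (Req_dec a b) as [->|]; [lra|]. left; apply ln_increasing; lra. Qed.

Definition Wf (T m : R) := (T - m) * ln (T / (T - m)).
Definition LL (T m : R) := ln (ln (2*T/m)).

Lemma dLL_lo (T m : R) : 1 <= m -> m <= T ->
  2*(2/(2*T+1)) / (ln (2*T/m) + ln (2*(T+1)/m)) <= LL (T+1) m - LL T m.
Proof.
  intros hm hT. unfold LL.
  set (a := ln (2*T/m)). set (b := ln (2*(T+1)/m)).
  assert (ha : 0 < a). { apply ln_pos_gt1. apply Rmult_lt_reg_r with m; [lra|].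
    unfold Rdiv. rewrite Rmult_assoc, Rinv_l; lra. }
  assert (hba : b - a = ln (1 + 1/T)).
  { unfold a, b. rewrite <- ln_div. f_equal. field. split; lra.
    apply Rdiv_lt_0_compat; lra. apply Rdiv_lt_0_compat; lra. }
  assert (h1 : 2/(2*T+1) <= b - a).
  { rewrite hba. pose proof (ln_lo1 (1+1/T)) as h.
    assert (0 < 1/T) by (apply Rdiv_lt_0_compat; lra).
    replace ((1 + 1/T - 1)/(1 + 1/T + 1)) with (1/(2*T+1)) in h by (field; lra).
    assert (2/(2*T+1) = 2*(1/(2*T+1))) by (field; lra). lra. }
  assert (hb : a < b). { assert (0 < 2/(2*T+1)) by (apply Rdiv_lt_0_compat; lra). lra. }
  rewrite <- ln_div by lra.
  pose proof (ln_lo1 (b/a)) as h.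
  assert (1 <= b/a). { apply Rmult_le_reg_r with a; [lra|]. unfold Rdiv. rewrite Rmult_assoc, Rinv_l; lra. }
  specialize (h H).
  replace ((b/a - 1)/(b/a+1)) with ((b-a)/(b+a)) in h by (field; lra).
  apply Rle_trans with (2*((b-a)/(b+a))); [|exact h].
  unfold Rdiv. rewrite (Rplus_comm a b).
  assert (0 < /(b+a)) by (apply Rinv_0_lt_compat; lra). nra.
Qed.

Lemma dW_k0 (T : R) : 0 < T -> Wf (T+1) T - Wf T T = ln (T+1).
Proof.
  intros hT. unfold Wf. replace (T+1-T) with 1 by ring. replace (T - T) with 0 by ring.
  replace ((T+1)/1) with (T+1) by field. ring.
Qed.

Lemma dW_lo (T m : R) : 1 <= m -> m + 1 <= T ->
  ln ((T+1)/(T+1-m)) - m/(T+1) <= Wf (T+1) m - Wf T m.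
Proof.
  intros hm hT. unfold Wf. set (k := T - m).
  replace (T + 1 - m) with (k+1) by (unfold k; ring).
  assert (hk : 1 <= k) by (unfold k; lra).
  assert (e : ln ((T+1)/(k+1)) - ln (T/k) = ln (k*(T+1)/((k+1)*T))).
  { rewrite <- ln_div. f_equal. field. repeat split; lra.
    apply Rdiv_lt_0_compat; lra. apply Rdiv_lt_0_compat; lra. }
  pose proof (ln_ge_1minv (k*(T+1)/((k+1)*T))) as h.
  assert (0 < k * (T + 1) / ((k + 1) * T)) by (apply Rdiv_lt_0_compat; nra).
  specialize (h H).
  replace (/ (k * (T + 1) / ((k + 1) * T))) with ((k+1)*T/(k*(T+1))) in h by (field; lra).
  assert (k * (1 - (k + 1) * T / (k * (T + 1))) = - m/(T+1)).
  { unfold k. field. lra. }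
  assert (k * (1 - (k + 1) * T / (k * (T + 1))) <= k * ln (k * (T + 1) / ((k + 1) * T))) by
    (apply Rmult_le_compat_l; lra).
  replace ((k + 1) * ln ((T + 1) / (k + 1)) - k * ln (T / k)) with
    (ln ((T + 1) / (k + 1)) + k * (ln ((T+1)/(k+1)) - ln (T/k))) by ring.
  rewrite e. lra.
Qed.

Definition SeenRHS (T m : R) := Wf (T+1) m - Wf T m + 3/2*m*(LL (T+1) m - LL T m).
Definition AS (T m : R) := ln (1 + m / ln ((T+1)/m) / T).

Lemma ln_1p_le (u : R) : 0 <= u -> ln (1 + u) <= u.
Proof. intros. pose proof (ln_le_sub1 (1+u)). lra. Qed.

Lemma seen_k0 (T : R) : 1 <= T -> AS T T <= SeenRHS T T.
Proof.
  intros hT. unfold AS, SeenRHS. rewrite dW_k0 by lra.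
  pose proof (dLL_lo T T ltac:(lra) ltac:(lra)) as hL.
  set (L := ln ((T+1)/T)).
  assert (hLlo : 2/(2*T+1) <= L).
  { unfold L. pose proof (ln_lo1 ((T+1)/T)) as h.
    assert (1 <= (T+1)/T) by (apply Rmult_le_reg_r with T; [lra|]; unfold Rdiv; rewrite Rmult_assoc, Rinv_l; lra).
    specialize (h H). replace (((T + 1) / T - 1) / ((T + 1) / T + 1)) with (1/(2*T+1)) in h by (field; lra).
    lra. }
  assert (hLp : 0 < L) by (assert (0 < 2/(2*T+1)) by (apply Rdiv_lt_0_compat; lra); lra).
  assert (hu : T / L / T <= T + /2).
  { replace (T/L/T) with (/L) by (field; lra).
    replace (T + /2) with (/ (2/(2*T+1))) by (field; lra).
    apply Rinv_le_contravar; [apply Rdiv_lt_0_compat; lra| lra]. }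
  assert (h1 : ln (1 + T / L / T) <= ln (T + 3/2)).
  { apply ln_le_mono; [|lra]. assert (0 < T/L/T) by (repeat apply Rdiv_lt_0_compat; lra). lra. }
  assert (h2 : ln (T + 3/2) <= ln (T+1) + (1/2)/(T+1)).
  { replace (T + 3/2) with ((T+1)*(1 + (1/2)/(T+1))) by (field; lra).
    rewrite ln_mult by (try apply Rplus_lt_0_compat; try apply Rdiv_lt_0_compat; lra).
    pose proof (ln_1p_le ((1/2)/(T+1))). assert (0 <= (1/2)/(T+1)) by (apply Rlt_le, Rdiv_lt_0_compat; lra). lra. }
  assert (ha : ln (2*T/T) = ln 2) by (f_equal; field; lra).
  assert (hb : ln (2*(T+1)/T) <= ln 4).
  { apply ln_le_mono. apply Rdiv_lt_0_compat; lra.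
    apply Rmult_le_reg_r with T; [lra|]. unfold Rdiv. rewrite Rmult_assoc, Rinv_l; lra. }
  assert (h4 : ln 4 = 2 * ln 2) by (replace 4 with (2*2) by ring; rewrite ln_mult by lra; ring).
  pose proof ln2_bounds.
  assert (hs : 0 < ln (2*T/T) + ln (2*(T+1)/T)).
  { rewrite ha. assert (0 < ln (2*(T+1)/T)). apply ln_pos_gt1.
    apply Rmult_lt_reg_r with T; [lra|]. unfold Rdiv. rewrite Rmult_assoc, Rinv_l; lra. lra. }
  assert (h5 : (1/2)/(T+1) <= 3/2*T*(2*(2/(2*T+1)) / (ln (2*T/T) + ln (2*(T+1)/T)))).
  { assert (ln (2*T/T) + ln (2*(T+1)/T) <= (21/10)) by lra.
    set (S := ln (2*T/T) + ln (2*(T+1)/T)) in *.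
    replace (3/2*T*(2*(2/(2*T+1)) / S)) with (6*T/((2*T+1)*S)) by (field; lra).
    apply Rle_trans with (6*T/((2*T+1)*(21/10))).
    - apply Rmult_le_reg_r with ((T+1)*((2*T+1)*(21/10))); [nra|].
      replace ((1/2)/(T+1)*((T+1)*((2*T+1)*(21/10)))) with ((2*T+1)*(105/100)) by (field; lra).
      replace (6*T/((2*T+1)*(21/10)) * ((T+1)*((2*T+1)*(21/10)))) with (6*T*(T+1)) by (field; lra). nra.
    - unfold Rdiv. apply Rmult_le_compat_l; [lra|]. apply Rinv_le_contravar; nra. }
  assert (3/2*T*(2*(2/(2*T+1)) / (ln (2*T/T) + ln (2*(T+1)/T))) <= 3/2*T*(LL (T+1) T - LL T T)).
  { apply Rmult_le_compat_l; lra. }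
  lra.
Qed.

Lemma div_le1 (a b : R) : 0 < b -> a <= b -> a / b <= 1.
Proof. intros. apply Rmult_le_reg_r with b; [lra|]. unfold Rdiv. rewrite Rmult_assoc, Rinv_l; lra. Qed.
Lemma le_div1 (a b : R) : 0 < b -> b <= a -> 1 <= a / b.
Proof. intros. apply Rmult_le_reg_r with b; [lra|]. unfold Rdiv. rewrite Rmult_assoc, Rinv_l; lra. Qed.
Lemma lt_div1 (a b : R) : 0 < b -> b < a -> 1 < a / b.
Proof. intros. apply Rmult_lt_reg_r with b; [lra|]. unfold Rdiv. rewrite Rmult_assoc, Rinv_l; lra. Qed.

Lemma dLL_contrib (T m S : R) : 1 <= m -> m <= T ->
  ln (2*T/m) + ln (2*(T+1)/m) <= S ->
  6*m/((2*T+1)*S) <= 3/2*m*(LL (T+1) m - LL T m).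
Proof.
  intros hm hT hS. pose proof (dLL_lo T m hm hT) as h.
  assert (0 < ln (2*T/m)) by (apply ln_pos_gt1; apply lt_div1; lra).
  assert (0 < ln (2*(T+1)/m)) by (apply ln_pos_gt1; apply lt_div1; lra).
  assert (0 < ln (2*T/m) + ln (2*(T+1)/m)) by lra.
  set (s := ln (2*T/m) + ln (2*(T+1)/m)) in *.
  apply Rle_trans with (3/2*m*(2*(2/(2*T+1))/s)).
  - replace (3/2*m*(2*(2/(2*T+1))/s)) with (6*m/((2*T+1)*s)) by (field; lra).
    unfold Rdiv. apply Rmult_le_compat_l; [lra|]. apply Rinv_le_contravar; nra.
  - apply Rmult_le_compat_l; lra.
Qed.

Lemma seen_near (T m : R) : 1 <= m -> m + 1 <= T -> 5*(T+1) <= 11*m -> AS T m <= SeenRHS T m.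
Proof.
  intros hm hT hy. unfold AS, SeenRHS.
  pose proof (dW_lo T m hm hT) as hW.
  set (L := ln ((T+1)/m)).
  assert (hL : 2*((T+1-m)/(T+1+m)) <= L).
  { unfold L. pose proof (ln_lo1 ((T+1)/m) (le_div1 (T+1) m ltac:(lra) ltac:(lra))) as h.
    replace (((T + 1) / m - 1) / ((T + 1) / m + 1)) with ((T+1-m)/(T+1+m)) in h by (field; lra). exact h. }
  assert (hx : 0 < (T+1-m)/(T+1+m)) by (apply Rdiv_lt_0_compat; lra).
  assert (hu : 1 + m / L / T <= (T+1)/(T+1-m)).
  { assert (m / L / T <= m * (T+1+m) / (2*T*(T+1-m))).
    { replace (m/L/T) with (m/T * /L) by (field; lra).
      replace (m * (T+1+m) / (2*T*(T+1-m))) with (m/T * / (2*((T+1-m)/(T+1+m)))) by (field; lra).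
      apply Rmult_le_compat_l. apply Rlt_le, Rdiv_lt_0_compat; lra.
      apply Rinv_le_contravar; lra. }
    assert (1 + m * (T+1+m) / (2*T*(T+1-m)) <= (T+1)/(T+1-m)).
    { apply Rmult_le_reg_r with (2*T*(T+1-m)); [nra|].
      replace ((1 + m * (T+1+m) / (2*T*(T+1-m))) * (2*T*(T+1-m))) with (2*T*(T+1-m) + m*(T+1+m)) by (field; lra).
      replace ((T+1)/(T+1-m) * (2*T*(T+1-m))) with (2*T*(T+1)) by (field; lra). nra. }
    lra. }
  assert (ha : ln (1 + m / L / T) <= ln ((T+1)/(T+1-m))).
  { apply ln_le_mono; [|exact hu]. assert (0 < m/L/T) by (repeat apply Rdiv_lt_0_compat; lra). lra. }
  assert (hlb : ln (2*(T+1)/m) <= 3/2).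
  { apply Rle_trans with (ln (22/5)).
    - apply ln_le_mono. apply Rdiv_lt_0_compat; lra.
      apply Rmult_le_reg_r with m; [lra|]. unfold Rdiv. rewrite Rmult_assoc, Rinv_l; lra.
    - replace (22/5) with (2*2*(11/10)) by field. rewrite !ln_mult by lra.
      pose proof ln2_bounds. pose proof (ln_1p_le (1/10)). replace (1 + 1/10) with (11/10) in H0 by field. lra. }
  assert (hla : ln (2*T/m) <= ln (2*(T+1)/m)).
  { apply ln_le_mono. apply Rdiv_lt_0_compat; lra. unfold Rdiv. apply Rmult_le_compat_r. apply Rlt_le, Rinv_0_lt_compat; lra. lra. }
  pose proof (dLL_contrib T m 3 hm ltac:(lra) ltac:(lra)).
  assert (m/(T+1) <= 6*m/((2*T+1)*3)).
  { apply Rmult_le_reg_r with ((T+1)*((2*T+1)*3)); [nra|].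
    replace (m/(T+1)*((T+1)*((2*T+1)*3))) with (m*(2*T+1)*3) by (field; lra).
    replace (6*m/((2*T+1)*3)*((T+1)*((2*T+1)*3))) with (6*m*(T+1)) by (field; lra). nra. }
  lra.
Qed.

Lemma dW_nonneg (T m : R) : 1 <= m -> m + 1 <= T -> 0 <= Wf (T+1) m - Wf T m.
Proof.
  intros hm hT. pose proof (dW_lo T m hm hT).
  pose proof (ln_ge_1minv ((T+1)/(T+1-m)) ltac:(apply Rdiv_lt_0_compat; lra)).
  replace (/ ((T+1)/(T+1-m))) with ((T+1-m)/(T+1)) in H0 by (field; lra).
  replace (1 - (T+1-m)/(T+1)) with (m/(T+1)) in H0 by (field; lra). lra.
Qed.

Lemma seen_far (T m : R) : 1 <= m -> 7*m <= T+1 -> AS T m <= SeenRHS T m.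
Proof.
  intros hm hy. unfold AS, SeenRHS.
  assert (hT : m + 1 <= T) by lra.
  pose proof (dW_nonneg T m hm hT).
  set (L := ln ((T+1)/m)).
  pose proof ln2_bounds.
  assert (hL7 : 19358/10000 <= L).
  { apply Rle_trans with (ln 7).
    - replace 7 with (2*2*2*(7/8)) by field. rewrite !ln_mult by lra.
      pose proof (ln_ge_1minv (7/8) ltac:(lra)). replace (/(7/8)) with (8/7) in H1 by field. lra.
    - apply ln_le_mono; [lra|]. apply Rmult_le_reg_r with m; [lra|]. unfold Rdiv. rewrite Rmult_assoc, Rinv_l; lra. }
  assert (hlb : ln (2*(T+1)/m) = ln 2 + L).
  { unfold L. rewrite <- ln_mult by (try apply Rdiv_lt_0_compat; lra). f_equal. field. lra. }
  assert (hla : ln (2*T/m) <= ln (2*(T+1)/m)).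
  { apply ln_le_mono. apply Rdiv_lt_0_compat; lra. unfold Rdiv. apply Rmult_le_compat_r. apply Rlt_le, Rinv_0_lt_compat; lra. lra. }
  pose proof (dLL_contrib T m (2*(ln 2 + L)) hm ltac:(lra) ltac:(lra)).
  assert (hu : 0 <= m / L / T) by (apply Rlt_le; repeat apply Rdiv_lt_0_compat; lra).
  pose proof (ln_1p_le _ hu).
  assert (m / L / T <= 6*m/((2*T+1)*(2*(ln 2 + L)))).
  { apply Rmult_le_reg_r with (L*T*((2*T+1)*(2*(ln 2 + L)))); [apply Rmult_lt_0_compat; nra|].
    replace (m / L / T * (L*T*((2*T+1)*(2*(ln 2 + L))))) with (m*((2*T+1)*(2*(ln 2 + L)))) by (field; lra).
    replace (6*m/((2*T+1)*(2*(ln 2 + L))) * (L*T*((2*T+1)*(2*(ln 2 + L))))) with (6*m*L*T) by (field; nra).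
    assert ((2*T+1)*ln 2 <= (T-1)*L) by nra. nra. }
  lra.
Qed.

Lemma seen_box (T m y0 y1 L0 L1 ef el : R) :
  1 <= m -> m + 1 <= T -> y0 <= (T+1)/m -> (T+1)/m <= y1 -> 0 < L0 -> L0 <= ln y0 -> ln y1 <= L1 ->
  el <= 1/m -> 1/m <= ef -> ef < y0 -> 1 < y0 -> 0 <= el ->
  ln (1 + 1/((y0 - ef)*L0)) <= 1/(y1*(2*y1-1)) + 2/3*(1/(2*y1-1))^3 + 3/((2*y1 - el)*(6933/10000 + L1)) ->
  AS T m <= SeenRHS T m.
Proof.
  intros hm hT hy0 hy1 hL0 hL0' hL1 hel hef hefy hy0' hel0 hnum.
  unfold AS, SeenRHS.
  set (y := (T+1)/m) in *.
  assert (hTy : T + 1 = y * m) by (unfold y; field; lra).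
  set (L := ln ((T+1)/m)).
  assert (hLy : L = ln y) by reflexivity.
  assert (hLlo : L0 <= L) by (rewrite hLy; apply Rle_trans with (ln y0); [lra|apply ln_le_mono; lra]).
  assert (hLhi : L <= L1) by (rewrite hLy; apply Rle_trans with (ln y1); [apply ln_le_mono; lra|lra]).
  pose proof ln2_bounds.
  assert (hT' : T = y*m - 1) by lra.
  assert (hym : y - 1/m = T/m) by (rewrite hT'; field; lra).
  assert (hym' : 0 < y - 1/m) by (rewrite hym; apply Rdiv_lt_0_compat; lra).
  assert (hmT : m / T = 1/(y - 1/m)) by (rewrite hym; field; split; lra).
  assert (hpos : 0 < y0 - ef) by lra.
  assert (hu : m / L / T <= 1/((y0 - ef)*L0)).
  { replace (m / L / T) with ((m/T)/L) by (field; split; lra). rewrite hmT.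
    replace (1/(y - 1/m)/L) with (1/((y - 1/m)*L)) by (field; split; lra).
    unfold Rdiv. rewrite !Rmult_1_l. apply Rinv_le_contravar. apply Rmult_lt_0_compat; lra.
    apply Rmult_le_compat; lra. }
  assert (ha : ln (1 + m / L / T) <= ln (1 + 1/((y0 - ef)*L0))).
  { apply ln_le_mono; [|lra]. assert (0 < m / L / T) by (repeat apply Rdiv_lt_0_compat; lra). lra. }
  pose proof (dW_lo T m hm hT) as hW.
  assert (e1 : (T+1)/(T+1-m) = y/(y-1)) by (rewrite hTy; field; split; lra).
  assert (e2 : m/(T+1) = 1/y) by (rewrite hTy; field; split; lra).
  rewrite e1, e2 in hW.
  pose proof (ln_lo (y/(y-1)) ltac:(apply le_div1; lra)) as hl. cbv zeta in hl.
  replace ((y/(y-1) - 1)/(y/(y-1) + 1)) with (1/(2*y-1)) in hl by (field; split; lra).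
  assert (hW2 : 1/(y1*(2*y1-1)) + 2/3*(1/(2*y1-1))^3 <= Wf (T+1) m - Wf T m).
  { assert (2*(1/(2*y-1)) + 2*(1/(2*y-1))^3/3 - 1/y = 1/(y*(2*y-1)) + 2/3*(1/(2*y-1))^3) by (field; split; lra).
    assert (1/(y1*(2*y1-1)) <= 1/(y*(2*y-1))).
    { unfold Rdiv. rewrite !Rmult_1_l. apply Rinv_le_contravar; nra. }
    assert ((1/(2*y1-1))^3 <= (1/(2*y-1))^3).
    { apply pow_incr. split. apply Rlt_le, Rdiv_lt_0_compat; lra.
      unfold Rdiv. rewrite !Rmult_1_l. apply Rinv_le_contravar; lra. }
    lra. }
  assert (hlb : ln (2*(T+1)/m) = ln 2 + L).
  { unfold L. rewrite <- ln_mult by (try apply Rdiv_lt_0_compat; lra). f_equal. field. lra. }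
  assert (hla : ln (2*T/m) <= ln (2*(T+1)/m)).
  { apply ln_le_mono. apply Rdiv_lt_0_compat; lra. unfold Rdiv. apply Rmult_le_compat_r. apply Rlt_le, Rinv_0_lt_compat; lra. lra. }
  pose proof (dLL_contrib T m (2*(6933/10000 + L1)) hm ltac:(lra) ltac:(lra)) as hLL.
  assert (3/((2*y1 - el)*(6933/10000 + L1)) <= 6*m/((2*T+1)*(2*(6933/10000 + L1)))).
  { replace (6*m/((2*T+1)*(2*(6933/10000 + L1)))) with (3/((2*y - 1/m)*(6933/10000 + L1))).
    2:{ assert (2*y - 1/m = (2*T+1)/m) by (rewrite hT'; field; lra).
        rewrite H0. field. repeat split; lra. }
    unfold Rdiv. apply Rmult_le_compat_l; [lra|]. apply Rinv_le_contravar.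
    - apply Rmult_lt_0_compat; [|lra].
      assert (1/m <= 1) by (apply div_le1; lra). lra.
    - apply Rmult_le_compat_r; lra. }
  rewrite <- hLy. lra.
Qed.

Lemma ln4_eq : ln 4 = 2 * ln 2.
Proof. replace 4 with (2*2) by ring. rewrite ln_mult by lra. ring. Qed.

Lemma lnlo_num (y r lr L0 : R) : 0 < r -> r <= y -> lr <= ln r ->
  L0 <= lr + (2*((y/r-1)/(y/r+1)) + 2*((y/r-1)/(y/r+1))^3/3) -> L0 <= ln y.
Proof.
  intros hr hry hlr hL. pose proof (ln_lo (y/r) (le_div1 y r hr hry)) as h. cbv zeta in h.
  replace (ln y) with (ln (r * (y/r))) by (f_equal; field; lra). rewrite ln_mult.
  lra. lra. apply Rdiv_lt_0_compat; lra.
Qed.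

Lemma lnhi_num (y r hr' L1 : R) : 0 < r -> r <= y -> ln r <= hr' ->
  hr' + (2*((y/r-1)/(y/r+1)) + 2*((y/r-1)/(y/r+1))^3/(3*(1-((y/r-1)/(y/r+1))^2))) <= L1 -> ln y <= L1.
Proof.
  intros hr hry hlr hL. pose proof (ln_hi (y/r) (le_div1 y r hr hry)) as h. cbv zeta in h.
  replace (ln y) with (ln (r * (y/r))) by (f_equal; field; lra). rewrite ln_mult.
  lra. lra. apply Rdiv_lt_0_compat; lra.
Qed.

Lemma ln_num (z B : R) : 1 <= z ->
  2*((z-1)/(z+1)) + 2*((z-1)/(z+1))^3/(3*(1-((z-1)/(z+1))^2)) <= B -> ln z <= B.
Proof. intros hz hB. pose proof (ln_hi z hz) as h. cbv zeta in h. lra. Qed.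

Lemma le_divR (a b m : R) : 0 < m -> a*m <= b -> a <= b/m.
Proof. intros. apply Rmult_le_reg_r with m; [lra|]. replace (b/m*m) with b by (field; lra). lra. Qed.
Lemma divR_le (a b m : R) : 0 < m -> b <= a*m -> b/m <= a.
Proof. intros. apply Rmult_le_reg_r with m; [lra|]. replace (b/m*m) with b by (field; lra). lra. Qed.
Lemma seen_mid3 (T m : R) : 3 <= m -> m + 1 <= T -> 11*m < 5*(T+1) -> T+1 < 7*m -> AS T m <= SeenRHS T m.
Proof.
  intros hm hT h1 h2.
  assert (hy0 : 22/10 <= (T+1)/m) by (apply le_divR; lra).
  assert (hy1 : (T+1)/m <= 7) by (apply divR_le; lra).
  assert (hm3 : 1/m <= 1/3) by (unfold Rdiv; rewrite !Rmult_1_l; apply Rinv_le_contravar; lra).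
  assert (hm0 : 0 <= 1/m) by (apply Rlt_le, Rdiv_lt_0_compat; lra).
  destruct (Rle_dec ((T+1)/m) (12/5)) as [hb0|hb0].
  { apply (seen_box T m (11/5) (12/5) (3941/5000) (8757/10000) (1/3) 0); try lra.
      * apply (lnlo_num (11/5) 2 (6929/10000)); [lra|lra|(pose proof ln2_bounds; lra)|lra].
      * apply (lnhi_num (12/5) 2 (6933/10000)); [lra|lra|(pose proof ln2_bounds; lra)|lra].
      * apply ln_num; lra.
  }
  apply Rnot_le_lt in hb0.
  destruct (Rle_dec ((T+1)/m) (263/100)) as [hb1|hb1].
  { apply (seen_box T m (12/5) (263/100) (547/625) (1209/1250) (1/3) 0); try lra.
      * apply (lnlo_num (12/5) 2 (6929/10000)); [lra|lra|(pose proof ln2_bounds; lra)|lra].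
      * apply (lnhi_num (263/100) 2 (6933/10000)); [lra|lra|(pose proof ln2_bounds; lra)|lra].
      * apply ln_num; lra.
  }
  apply Rnot_le_lt in hb1.
  destruct (Rle_dec ((T+1)/m) (29/10)) as [hb2|hb2].
  { apply (seen_box T m (263/100) (29/10) (9667/10000) (213/200) (1/3) 0); try lra.
      * apply (lnlo_num (263/100) 2 (6929/10000)); [lra|lra|(pose proof ln2_bounds; lra)|lra].
      * apply (lnhi_num (29/10) 2 (6933/10000)); [lra|lra|(pose proof ln2_bounds; lra)|lra].
      * apply ln_num; lra.
  }
  apply Rnot_le_lt in hb2.
  destruct (Rle_dec ((T+1)/m) (321/100)) as [hb3|hb3].
  { apply (seen_box T m (29/10) (321/100) (10643/10000) (11667/10000) (1/3) 0); try lra.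
      * apply (lnlo_num (29/10) 2 (6929/10000)); [lra|lra|(pose proof ln2_bounds; lra)|lra].
      * apply (lnhi_num (321/100) 2 (6933/10000)); [lra|lra|(pose proof ln2_bounds; lra)|lra].
      * apply ln_num; lra.
  }
  apply Rnot_le_lt in hb3.
  destruct (Rle_dec ((T+1)/m) (357/100)) as [hb4|hb4].
  { apply (seen_box T m (321/100) (357/100) (11657/10000) (12733/10000) (1/3) 0); try lra.
      * apply (lnlo_num (321/100) 2 (6929/10000)); [lra|lra|(pose proof ln2_bounds; lra)|lra].
      * apply (lnhi_num (357/100) 2 (6933/10000)); [lra|lra|(pose proof ln2_bounds; lra)|lra].
      * apply ln_num; lra.
  }
  apply Rnot_le_lt in hb4.
  destruct (Rle_dec ((T+1)/m) 4) as [hb5|hb5].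
  { apply (seen_box T m (357/100) 4 (2543/2000) (6933/5000) (1/3) 0); try lra.
      * apply (lnlo_num (357/100) 2 (6929/10000)); [lra|lra|(pose proof ln2_bounds; lra)|lra].
      * apply (lnhi_num 4 4 (6933/5000)); [lra|lra|(rewrite ln4_eq; pose proof ln2_bounds; lra)|lra].
      * apply ln_num; lra.
  }
  apply Rnot_le_lt in hb5.
  destruct (Rle_dec ((T+1)/m) (451/100)) as [hb6|hb6].
  { apply (seen_box T m 4 (451/100) (6929/5000) (15067/10000) (1/3) 0); try lra.
      * apply (lnlo_num 4 4 (6929/5000)); [lra|lra|(rewrite ln4_eq; pose proof ln2_bounds; lra)|lra].
      * apply (lnhi_num (451/100) 4 (6933/5000)); [lra|lra|(rewrite ln4_eq; pose proof ln2_bounds; lra)|lra].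
      * apply ln_num; lra.
  }
  apply Rnot_le_lt in hb6.
  destruct (Rle_dec ((T+1)/m) (128/25)) as [hb7|hb7].
  { apply (seen_box T m (451/100) (128/25) (7529/5000) (3267/2000) (1/3) 0); try lra.
      * apply (lnlo_num (451/100) 4 (6929/5000)); [lra|lra|(rewrite ln4_eq; pose proof ln2_bounds; lra)|lra].
      * apply (lnhi_num (128/25) 4 (6933/5000)); [lra|lra|(rewrite ln4_eq; pose proof ln2_bounds; lra)|lra].
      * apply ln_num; lra.
  }
  apply Rnot_le_lt in hb7.
  destruct (Rle_dec ((T+1)/m) (293/50)) as [hb8|hb8].
  { apply (seen_box T m (128/25) (293/50) (8163/5000) (8843/5000) (1/3) 0); try lra.
      * apply (lnlo_num (128/25) 4 (6929/5000)); [lra|lra|(rewrite ln4_eq; pose proof ln2_bounds; lra)|lra].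
      * apply (lnhi_num (293/50) 4 (6933/5000)); [lra|lra|(rewrite ln4_eq; pose proof ln2_bounds; lra)|lra].
      * apply ln_num; lra.
  }
  apply Rnot_le_lt in hb8.
  destruct (Rle_dec ((T+1)/m) (27/4)) as [hb9|hb9].
  { apply (seen_box T m (293/50) (27/4) (707/400) (9551/5000) (1/3) 0); try lra.
      * apply (lnlo_num (293/50) 4 (6929/5000)); [lra|lra|(rewrite ln4_eq; pose proof ln2_bounds; lra)|lra].
      * apply (lnhi_num (27/4) 4 (6933/5000)); [lra|lra|(rewrite ln4_eq; pose proof ln2_bounds; lra)|lra].
      * apply ln_num; lra.
  }
  apply Rnot_le_lt in hb9.
  apply (seen_box T m (27/4) 7 (3817/2000) (19467/10000) (1/3) 0); try lra.
      * apply (lnlo_num (27/4) 4 (6929/5000)); [lra|lra|(rewrite ln4_eq; pose proof ln2_bounds; lra)|lra].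
      * apply (lnhi_num 7 4 (6933/5000)); [lra|lra|(rewrite ln4_eq; pose proof ln2_bounds; lra)|lra].
      * apply ln_num; lra.

Qed.
Lemma seen_mid1 (T : R) : T = 2 \/ T = 3 \/ T = 4 \/ T = 5 -> AS T 1 <= SeenRHS T 1.
Proof.
  intros hT.
  assert (hd : (T+1)/1 = T+1) by field.
  destruct hT as [ -> | [ -> | [ -> | -> ]]].
  - apply (seen_box 2 1 3 3 (5491/5000) (10989/10000) 1 1); try lra.
      * apply (lnlo_num 3 2 (6929/10000)); [lra|lra|(pose proof ln2_bounds; lra)|lra].
      * apply (lnhi_num 3 2 (6933/10000)); [lra|lra|(pose proof ln2_bounds; lra)|lra].
      * apply ln_num; lra.
  - apply (seen_box 3 1 4 4 (6929/5000) (6933/5000) 1 1); try lra.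
      * apply (lnlo_num 4 4 (6929/5000)); [lra|lra|(rewrite ln4_eq; pose proof ln2_bounds; lra)|lra].
      * apply (lnhi_num 4 4 (6933/5000)); [lra|lra|(rewrite ln4_eq; pose proof ln2_bounds; lra)|lra].
      * apply ln_num; lra.
  - apply (seen_box 4 1 5 5 (16089/10000) (8049/5000) 1 1); try lra.
      * apply (lnlo_num 5 4 (6929/5000)); [lra|lra|(rewrite ln4_eq; pose proof ln2_bounds; lra)|lra].
      * apply (lnhi_num 5 4 (6933/5000)); [lra|lra|(rewrite ln4_eq; pose proof ln2_bounds; lra)|lra].
      * apply ln_num; lra.
  - apply (seen_box 5 1 6 6 (17911/10000) (8961/5000) 1 1); try lra.
      * apply (lnlo_num 6 4 (6929/5000)); [lra|lra|(rewrite ln4_eq; pose proof ln2_bounds; lra)|lra].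
      * apply (lnhi_num 6 4 (6933/5000)); [lra|lra|(rewrite ln4_eq; pose proof ln2_bounds; lra)|lra].
      * apply ln_num; lra.
Qed.
Lemma seen_mid2 (T : R) : T = 4 \/ T = 5 \/ T = 6 \/ T = 7 \/ T = 8 \/ T = 9 \/ T = 10 \/ T = 11 \/ T = 12 -> AS T 2 <= SeenRHS T 2.
Proof.
  intros hT.
  destruct hT as [->|[->|[->|[->|[->|[ -> | [ -> | [ -> | -> ]]]]]]]].
  - apply (seen_box 4 2 (5/2) (5/2) (229/250) (1833/2000) (1/2) (1/2)); try lra.
      * apply (lnlo_num (5/2) 2 (6929/10000)); [lra|lra|(pose proof ln2_bounds; lra)|lra].
      * apply (lnhi_num (5/2) 2 (6933/10000)); [lra|lra|(pose proof ln2_bounds; lra)|lra].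
      * apply ln_num; lra.
  - apply (seen_box 5 2 3 3 (5491/5000) (10989/10000) (1/2) (1/2)); try lra.
      * apply (lnlo_num 3 2 (6929/10000)); [lra|lra|(pose proof ln2_bounds; lra)|lra].
      * apply (lnhi_num 3 2 (6933/10000)); [lra|lra|(pose proof ln2_bounds; lra)|lra].
      * apply ln_num; lra.
  - apply (seen_box 6 2 (7/2) (7/2) (6259/5000) (6267/5000) (1/2) (1/2)); try lra.
      * apply (lnlo_num (7/2) 2 (6929/10000)); [lra|lra|(pose proof ln2_bounds; lra)|lra].
      * apply (lnhi_num (7/2) 2 (6933/10000)); [lra|lra|(pose proof ln2_bounds; lra)|lra].
      * apply ln_num; lra.
  - apply (seen_box 7 2 4 4 (6929/5000) (6933/5000) (1/2) (1/2)); try lra.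
      * apply (lnlo_num 4 4 (6929/5000)); [lra|lra|(rewrite ln4_eq; pose proof ln2_bounds; lra)|lra].
      * apply (lnhi_num 4 4 (6933/5000)); [lra|lra|(rewrite ln4_eq; pose proof ln2_bounds; lra)|lra].
      * apply ln_num; lra.
  - apply (seen_box 8 2 (9/2) (9/2) (3007/2000) (3761/2500) (1/2) (1/2)); try lra.
      * apply (lnlo_num (9/2) 4 (6929/5000)); [lra|lra|(rewrite ln4_eq; pose proof ln2_bounds; lra)|lra].
      * apply (lnhi_num (9/2) 4 (6933/5000)); [lra|lra|(rewrite ln4_eq; pose proof ln2_bounds; lra)|lra].
      * apply ln_num; lra.
  - apply (seen_box 9 2 5 5 (16089/10000) (8049/5000) (1/2) (1/2)); try lra.
      * apply (lnlo_num 5 4 (6929/5000)); [lra|lra|(rewrite ln4_eq; pose proof ln2_bounds; lra)|lra].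
      * apply (lnhi_num 5 4 (6933/5000)); [lra|lra|(rewrite ln4_eq; pose proof ln2_bounds; lra)|lra].
      * apply ln_num; lra.
  - apply (seen_box 10 2 (11/2) (11/2) (8521/5000) (17051/10000) (1/2) (1/2)); try lra.
      * apply (lnlo_num (11/2) 4 (6929/5000)); [lra|lra|(rewrite ln4_eq; pose proof ln2_bounds; lra)|lra].
      * apply (lnhi_num (11/2) 4 (6933/5000)); [lra|lra|(rewrite ln4_eq; pose proof ln2_bounds; lra)|lra].
      * apply ln_num; lra.
  - apply (seen_box 11 2 6 6 (17911/10000) (8961/5000) (1/2) (1/2)); try lra.
      * apply (lnlo_num 6 4 (6929/5000)); [lra|lra|(rewrite ln4_eq; pose proof ln2_bounds; lra)|lra].
      * apply (lnhi_num 6 4 (6933/5000)); [lra|lra|(rewrite ln4_eq; pose proof ln2_bounds; lra)|lra].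
      * apply ln_num; lra.
  - apply (seen_box 12 2 (13/2) (13/2) (18709/10000) (4681/2500) (1/2) (1/2)); try lra.
      * apply (lnlo_num (13/2) 4 (6929/5000)); [lra|lra|(rewrite ln4_eq; pose proof ln2_bounds; lra)|lra].
      * apply (lnhi_num (13/2) 4 (6933/5000)); [lra|lra|(rewrite ln4_eq; pose proof ln2_bounds; lra)|lra].
      * apply ln_num; lra.
Qed.


Lemma seen_step (T m : nat) : (1 <= m)%nat -> (m <= T)%nat -> AS (INR T) (INR m) <= SeenRHS (INR T) (INR m).
Proof.
  intros hm hT.
  assert (Hm : 1 <= INR m) by (apply (le_INR 1); lia).
  destruct (Nat.eq_dec m T) as [<-|hne].
  { apply seen_k0; lra. }
  assert (HT : INR m + 1 <= INR T) by (rewrite <- S_INR; apply le_INR; lia).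
  destruct (le_lt_dec (5*(T+1)) (11*m)) as [h1|h1].
  { apply seen_near; try lra.
    assert (INR (5*(T+1)) <= INR (11*m)) by (apply le_INR; lia).
    rewrite !mult_INR, plus_INR in H. simpl in H. lra. }
  destruct (le_lt_dec (7*m) (T+1)) as [h2|h2].
  { apply seen_far; try lra.
    assert (INR (7*m) <= INR (T+1)) by (apply le_INR; lia).
    rewrite mult_INR, plus_INR in H. simpl in H. lra. }
  assert (R1 : 11 * INR m < 5 * (INR T + 1)).
  { assert (INR (11*m) < INR (5*(T+1))) by (apply lt_INR; lia).
    rewrite !mult_INR, plus_INR in H. simpl in H. lra. }
  assert (R2 : INR T + 1 < 7 * INR m).
  { assert (INR (T+1) < INR (7*m)) by (apply lt_INR; lia).
    rewrite mult_INR, plus_INR in H. simpl in H. lra. }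
  destruct (Nat.eq_dec m 1) as [->|hm1].
  { simpl. apply seen_mid1.
    assert (T = 2 \/ T = 3 \/ T = 4 \/ T = 5)%nat as HH by lia.
    destruct HH as [ -> | [ -> | [ -> | -> ]]]; simpl; lra. }
  destruct (Nat.eq_dec m 2) as [->|hm2].
  { replace (INR 2) with 2 by (simpl; lra). apply seen_mid2.
    assert (T = 4 \/ T = 5 \/ T = 6 \/ T = 7 \/ T = 8 \/ T = 9 \/ T = 10 \/ T = 11 \/ T = 12)%nat as HH by lia.
    destruct HH as [ -> | [ -> | [ -> | [ -> | [ -> | [ -> | [ -> | [ -> | -> ]]]]]]]]; simpl; lra. }
  apply seen_mid3; try lra.
  replace 3 with (INR 3) by (simpl; lra). apply le_INR; lia.
Qed.

Definition Fnew (rho : R) := ln (ln (2*rho) + 1) + 3/2*(1 - 1/rho)/ln (2*rho) - 3/2*ln (ln (2*rho)).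

Lemma lnlo_num_inv (q r hr' L0 : R) : 0 < q -> 0 < r -> r <= 1/q -> ln r <= hr' ->
  hr' + (2*(((1/q)/r-1)/((1/q)/r+1)) + 2*(((1/q)/r-1)/((1/q)/r+1))^3/(3*(1-(((1/q)/r-1)/((1/q)/r+1))^2))) <= - L0 -> L0 <= ln q.
Proof.
  intros hq hr hrq hh hL. pose proof (lnhi_num (1/q) r hr' (-L0) hr hrq hh hL).
  replace (1/q) with (/q) in H by (field; lra). rewrite ln_Rinv in H by lra. lra.
Qed.

Lemma lnhi_num_inv (q r lr L1 : R) : 0 < q -> 0 < r -> r <= 1/q -> lr <= ln r ->
  - L1 <= lr + (2*(((1/q)/r-1)/((1/q)/r+1)) + 2*(((1/q)/r-1)/((1/q)/r+1))^3/3) -> ln q <= L1.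
Proof.
  intros hq hr hrq hh hL. pose proof (lnlo_num (1/q) r lr (-L1) hr hrq hh hL).
  replace (1/q) with (/q) in H by (field; lra). rewrite ln_Rinv in H by lra. lra.
Qed.

Lemma new_box (rho r0 r1 Q0 Q1 A B : R) : r0 <= rho -> rho <= r1 -> 1 <= r0 -> 0 < Q0 ->
  Q0 <= ln (2*r0) -> ln (2*r1) <= Q1 -> ln (Q1+1) <= A -> B <= ln Q0 ->
  A + 3/2*(1 - 1/r1)/Q0 - 3/2*B <= 73/60 -> Fnew rho <= 73/60.
Proof.
  intros h0 h1 hr0 hQ0 hQ0' hQ1 hA hB hnum. unfold Fnew.
  set (Q := ln (2*rho)).
  assert (Q0 <= Q) by (unfold Q; apply Rle_trans with (ln (2*r0)); [lra|apply ln_le_mono; lra]).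
  assert (Q <= Q1) by (unfold Q; apply Rle_trans with (ln (2*r1)); [apply ln_le_mono; lra|lra]).
  assert (ln (Q+1) <= A) by (apply Rle_trans with (ln (Q1+1)); [apply ln_le_mono; lra|lra]).
  assert (B <= ln Q) by (apply Rle_trans with (ln Q0); [lra|apply ln_le_mono; lra]).
  assert (3/2*(1 - 1/rho)/Q <= 3/2*(1 - 1/r1)/Q0).
  { assert (0 <= 1 - 1/rho) by (assert (1/rho <= 1) by (apply div_le1; lra); lra).
    assert (1 - 1/rho <= 1 - 1/r1).
    { assert (1/r1 <= 1/rho) by (unfold Rdiv; rewrite !Rmult_1_l; apply Rinv_le_contravar; lra). lra. }
    assert ((1-1/rho)/Q <= (1-1/r1)/Q0).
    { apply Rle_trans with ((1-1/r1)/Q).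
      - unfold Rdiv at 1 3. apply Rmult_le_compat_r; [left; apply Rinv_0_lt_compat; lra| lra].
      - unfold Rdiv at 1 3. apply Rmult_le_compat_l; [lra| apply Rinv_le_contravar; lra]. }
    replace (3/2*(1-1/rho)/Q) with (3/2*((1-1/rho)/Q)) by (field; lra).
    replace (3/2*(1-1/r1)/Q0) with (3/2*((1-1/r1)/Q0)) by (field; lra). lra. }
  lra.
Qed.

Lemma new_tail (rho : R) : 31/10 <= rho -> Fnew rho <= 73/60.
Proof.
  intros h. unfold Fnew. set (Q := ln (2*rho)).
  pose proof ln2_bounds.
  assert (hQ : 18/10 <= Q).
  { unfold Q. apply Rle_trans with (ln (62/10)); [|apply ln_le_mono; lra].
    apply (lnlo_num (62/10) 4 (13858/10000)); try lra. rewrite ln4_eq; lra. }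
  assert (h1 : ln (Q+1) - ln Q <= 1/Q).
  { rewrite <- ln_div by lra. replace ((Q+1)/Q) with (1 + 1/Q) by (field; lra).
    apply ln_1p_le. apply Rlt_le, Rdiv_lt_0_compat; lra. }
  assert (h2 : 58/100 <= ln Q).
  { apply Rle_trans with (ln (18/10)); [|apply ln_le_mono; lra].
    apply (lnlo_num (18/10) 1 0); try lra. rewrite ln_1; lra. }
  assert (3/2*(1 - 1/rho)/Q <= 3/2/Q).
  { replace (3/2*(1-1/rho)/Q) with ((3/2*(1-1/rho)) * /Q) by (field; lra).
    replace (3/2/Q) with ((3/2) * /Q) by (field; lra).
    apply Rmult_le_compat_r. apply Rlt_le, Rinv_0_lt_compat; lra.
    assert (0 < 1/rho) by (apply Rdiv_lt_0_compat; lra). lra. }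
  assert (1/Q + 3/2/Q <= 25/18).
  { replace (1/Q + 3/2/Q) with (5/2 * /Q) by (field; lra).
    assert (/Q <= /(18/10)) by (apply Rinv_le_contravar; lra). lra. }
  lra.
Qed.
Lemma new_all (rho : R) : 1 <= rho -> Fnew rho <= 73/60.
Proof.
  intros h.
  destruct (Rle_dec rho (21/20)) as [hn0|hn0].
  { apply (new_box rho 1 (21/20) (6929/10000) (7421/10000) (1389/2500) (-367/1000)); try lra.
    + replace (2 * 1) with 2 by lra. apply (lnlo_num 2 2 (6929/10000)); [lra|lra|(pose proof ln2_bounds; lra)|lra].
    + replace (2 * (21/20)) with (21/10) by lra. apply (lnhi_num (21/10) 2 (6933/10000)); [lra|lra|(pose proof ln2_bounds; lra)|lra].
    + replace ((7421/10000) + 1) with (17421/10000) by lra. apply (lnhi_num (17421/10000) 1 0); [lra|lra|(rewrite ln_1; lra)|lra].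
    + apply (lnlo_num_inv (6929/10000) 1 0); [lra|lra|lra|(rewrite ln_1; lra)|lra].
  }
  apply Rnot_le_lt in hn0.
  destruct (Rle_dec rho (11/10)) as [hn1|hn1].
  { apply (new_box rho (21/20) (11/10) (927/1250) (7887/10000) (5821/10000) (-299/1000)); try lra.
    + replace (2 * (21/20)) with (21/10) by lra. apply (lnlo_num (21/10) 2 (6929/10000)); [lra|lra|(pose proof ln2_bounds; lra)|lra].
    + replace (2 * (11/10)) with (11/5) by lra. apply (lnhi_num (11/5) 2 (6933/10000)); [lra|lra|(pose proof ln2_bounds; lra)|lra].
    + replace ((7887/10000) + 1) with (17887/10000) by lra. apply (lnhi_num (17887/10000) 1 0); [lra|lra|(rewrite ln_1; lra)|lra].
    + apply (lnlo_num_inv (927/1250) 1 0); [lra|lra|lra|(rewrite ln_1; lra)|lra].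
  }
  apply Rnot_le_lt in hn1.
  destruct (Rle_dec rho (23/20)) as [hn2|hn2].
  { apply (new_box rho (11/10) (23/20) (3941/5000) (8331/10000) (6067/10000) (-2381/10000)); try lra.
    + replace (2 * (11/10)) with (11/5) by lra. apply (lnlo_num (11/5) 2 (6929/10000)); [lra|lra|(pose proof ln2_bounds; lra)|lra].
    + replace (2 * (23/20)) with (23/10) by lra. apply (lnhi_num (23/10) 2 (6933/10000)); [lra|lra|(pose proof ln2_bounds; lra)|lra].
    + replace ((8331/10000) + 1) with (18331/10000) by lra. apply (lnhi_num (18331/10000) 1 0); [lra|lra|(rewrite ln_1; lra)|lra].
    + apply (lnlo_num_inv (3941/5000) 1 0); [lra|lra|lra|(rewrite ln_1; lra)|lra].
  }
  apply Rnot_le_lt in hn2.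
  destruct (Rle_dec rho (6/5)) as [hn3|hn3].
  { apply (new_box rho (23/20) (6/5) (4163/5000) (8757/10000) (3149/5000) (-1833/10000)); try lra.
    + replace (2 * (23/20)) with (23/10) by lra. apply (lnlo_num (23/10) 2 (6929/10000)); [lra|lra|(pose proof ln2_bounds; lra)|lra].
    + replace (2 * (6/5)) with (12/5) by lra. apply (lnhi_num (12/5) 2 (6933/10000)); [lra|lra|(pose proof ln2_bounds; lra)|lra].
    + replace ((8757/10000) + 1) with (18757/10000) by lra. apply (lnhi_num (18757/10000) 1 0); [lra|lra|(rewrite ln_1; lra)|lra].
    + apply (lnlo_num_inv (4163/5000) 1 0); [lra|lra|lra|(rewrite ln_1; lra)|lra].
  }
  apply Rnot_le_lt in hn3.
  destruct (Rle_dec rho (63/50)) as [hn4|hn4].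
  { apply (new_box rho (6/5) (63/50) (547/625) (1849/2000) (6557/10000) (-667/5000)); try lra.
    + replace (2 * (6/5)) with (12/5) by lra. apply (lnlo_num (12/5) 2 (6929/10000)); [lra|lra|(pose proof ln2_bounds; lra)|lra].
    + replace (2 * (63/50)) with (63/25) by lra. apply (lnhi_num (63/25) 2 (6933/10000)); [lra|lra|(pose proof ln2_bounds; lra)|lra].
    + replace ((1849/2000) + 1) with (3849/2000) by lra. apply (lnhi_num (3849/2000) 1 0); [lra|lra|(rewrite ln_1; lra)|lra].
    + apply (lnlo_num_inv (547/625) 1 0); [lra|lra|lra|(rewrite ln_1; lra)|lra].
  }
  apply Rnot_le_lt in hn4.
  destruct (Rle_dec rho (133/100)) as [hn5|hn5].
  { apply (new_box rho (63/50) (133/100) (231/250) (1957/2000) (1709/2500) (-791/10000)); try lra.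
    + replace (2 * (63/50)) with (63/25) by lra. apply (lnlo_num (63/25) 2 (6929/10000)); [lra|lra|(pose proof ln2_bounds; lra)|lra].
    + replace (2 * (133/100)) with (133/50) by lra. apply (lnhi_num (133/50) 2 (6933/10000)); [lra|lra|(pose proof ln2_bounds; lra)|lra].
    + replace ((1957/2000) + 1) with (3957/2000) by lra. apply (lnhi_num (3957/2000) 1 0); [lra|lra|(rewrite ln_1; lra)|lra].
    + apply (lnlo_num_inv (231/250) 1 0); [lra|lra|lra|(rewrite ln_1; lra)|lra].
  }
  apply Rnot_le_lt in hn5.
  destruct (Rle_dec rho (143/100)) as [hn6|hn6].
  { apply (new_box rho (133/100) (143/100) (489/500) (10511/10000) (3593/5000) (-223/10000)); try lra.
    + replace (2 * (133/100)) with (133/50) by lra. apply (lnlo_num (133/50) 2 (6929/10000)); [lra|lra|(pose proof ln2_bounds; lra)|lra].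
    + replace (2 * (143/100)) with (143/50) by lra. apply (lnhi_num (143/50) 2 (6933/10000)); [lra|lra|(pose proof ln2_bounds; lra)|lra].
    + replace ((10511/10000) + 1) with (20511/10000) by lra. apply (lnhi_num (20511/10000) 2 (6933/10000)); [lra|lra|(pose proof ln2_bounds; lra)|lra].
    + apply (lnlo_num_inv (489/500) 1 0); [lra|lra|lra|(rewrite ln_1; lra)|lra].
  }
  apply Rnot_le_lt in hn6.
  destruct (Rle_dec rho (79/50)) as [hn7|hn7].
  { apply (new_box rho (143/100) (79/50) (2101/2000) (11509/10000) (7661/10000) (123/2500)); try lra.
    + replace (2 * (143/100)) with (143/50) by lra. apply (lnlo_num (143/50) 2 (6929/10000)); [lra|lra|(pose proof ln2_bounds; lra)|lra].
    + replace (2 * (79/50)) with (79/25) by lra. apply (lnhi_num (79/25) 2 (6933/10000)); [lra|lra|(pose proof ln2_bounds; lra)|lra].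
    + replace ((11509/10000) + 1) with (21509/10000) by lra. apply (lnhi_num (21509/10000) 2 (6933/10000)); [lra|lra|(pose proof ln2_bounds; lra)|lra].
    + apply (lnlo_num (2101/2000) 1 0); [lra|lra|(rewrite ln_1; lra)|lra].
  }
  apply Rnot_le_lt in hn7.
  destruct (Rle_dec rho (183/100)) as [hn8|hn8].
  { apply (new_box rho (79/50) (183/100) (23/20) (12983/10000) (2081/2500) (1397/10000)); try lra.
    + replace (2 * (79/50)) with (79/25) by lra. apply (lnlo_num (79/25) 2 (6929/10000)); [lra|lra|(pose proof ln2_bounds; lra)|lra].
    + replace (2 * (183/100)) with (183/50) by lra. apply (lnhi_num (183/50) 2 (6933/10000)); [lra|lra|(pose proof ln2_bounds; lra)|lra].
    + replace ((12983/10000) + 1) with (22983/10000) by lra. apply (lnhi_num (22983/10000) 2 (6933/10000)); [lra|lra|(pose proof ln2_bounds; lra)|lra].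
    + apply (lnlo_num (23/20) 1 0); [lra|lra|(rewrite ln_1; lra)|lra].
  }
  apply Rnot_le_lt in hn8.
  destruct (Rle_dec rho (59/25)) as [hn9|hn9].
  { apply (new_box rho (183/100) (59/25) (6481/5000) (7761/5000) (2343/2500) (1297/5000)); try lra.
    + replace (2 * (183/100)) with (183/50) by lra. apply (lnlo_num (183/50) 2 (6929/10000)); [lra|lra|(pose proof ln2_bounds; lra)|lra].
    + replace (2 * (59/25)) with (118/25) by lra. apply (lnhi_num (118/25) 4 (6933/5000)); [lra|lra|(rewrite ln4_eq; pose proof ln2_bounds; lra)|lra].
    + replace ((7761/5000) + 1) with (12761/5000) by lra. apply (lnhi_num (12761/5000) 2 (6933/10000)); [lra|lra|(pose proof ln2_bounds; lra)|lra].
    + apply (lnlo_num (6481/5000) 1 0); [lra|lra|(rewrite ln_1; lra)|lra].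
  }
  apply Rnot_le_lt in hn9.
  destruct (Rle_dec rho (31/10)) as [hn10|hn10].
  { apply (new_box rho (59/25) (31/10) (15513/10000) (73/40) (2597/2500) (1097/2500)); try lra.
    + replace (2 * (59/25)) with (118/25) by lra. apply (lnlo_num (118/25) 4 (6929/5000)); [lra|lra|(rewrite ln4_eq; pose proof ln2_bounds; lra)|lra].
    + replace (2 * (31/10)) with (31/5) by lra. apply (lnhi_num (31/5) 4 (6933/5000)); [lra|lra|(rewrite ln4_eq; pose proof ln2_bounds; lra)|lra].
    + replace ((73/40) + 1) with (113/40) by lra. apply (lnhi_num (113/40) 2 (6933/10000)); [lra|lra|(pose proof ln2_bounds; lra)|lra].
    + apply (lnlo_num (15513/10000) 1 0); [lra|lra|(rewrite ln_1; lra)|lra].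
  }
  apply Rnot_le_lt in hn10.
  apply new_tail; lra.
Qed.


Definition Phi (T m : R) := -(m-1)*ln m + Wf T m + 3/2*m*LL T m + 13/10*m - 14/100.

Lemma new_step_R (T m : R) : 1 <= m -> m <= T ->
  ln (ln ((T+1)/m)/m + 1/T) <= 11/12 + Phi (T+1) (m+1) - Phi T m.
Proof.
  intros hm hT. unfold Phi.
  set (L := ln ((T+1)/m)).
  assert (hL : 0 < L) by (apply ln_pos_gt1; apply lt_div1; lra).
  assert (hW : 0 <= Wf (T+1) (m+1) - Wf T m).
  { unfold Wf. replace (T+1-(m+1)) with (T-m) by ring.
    destruct (Req_dec T m) as [->|hne]. { replace (m-m) with 0 by ring. lra. }
    rewrite <- Rmult_minus_distr_l. apply Rmult_le_pos; [lra|].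
    assert (ln (T/(T-m)) <= ln ((T+1)/(T-m))).
    { apply ln_le_mono. apply Rdiv_lt_0_compat; lra. unfold Rdiv. apply Rmult_le_compat_r.
      apply Rlt_le, Rinv_0_lt_compat; lra. lra. }
    lra. }
  assert (hml : -(m+1-1)*ln (m+1) + (m-1)*ln m >= - ln m - 1).
  { assert (m*(ln (m+1) - ln m) <= 1).
    { rewrite ln_succ_diff by lra. pose proof (ln_1p_le (1/m) ltac:(apply Rlt_le, Rdiv_lt_0_compat; lra)).
      apply Rmult_le_compat_l with (r := m) in H; [|lra]. replace (m*(1/m)) with 1 in H by (field; lra). lra. }
    lra. }
  assert (han : ln (L/m + 1/T) = ln (L + m/T) - ln m).
  { rewrite <- ln_div. f_equal. field. split; lra.
    assert (0 < m/T) by (apply Rdiv_lt_0_compat; lra). lra. lra. }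
  set (rho := (T+1)/(m+1)).
  assert (hrho : 1 <= rho) by (apply le_div1; lra).
  set (Q := ln (2*rho)).
  assert (hQ : 0 < Q) by (apply ln_pos_gt1; lra).
  assert (eQ : LL (T+1) (m+1) = ln Q) by (unfold LL, Q, rho; f_equal; f_equal; field; lra).
  set (P := ln (2*T/m)).
  assert (hP : 0 < P) by (apply ln_pos_gt1; apply lt_div1; lra).
  assert (eP : LL T m = ln P) by reflexivity.
  assert (hLQ : L <= Q).
  { apply ln_le_mono. apply Rdiv_lt_0_compat; lra. unfold rho.
    apply Rmult_le_reg_r with (m*(m+1)); [nra|].
    replace ((T+1)/m*(m*(m+1))) with ((T+1)*(m+1)) by (field; lra).
    replace (2*((T+1)/(m+1))*(m*(m+1))) with (2*(T+1)*m) by (field; lra). nra. }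
  assert (hmT : m/T <= 1) by (apply div_le1; lra).
  assert (h1 : ln (L + m/T) <= ln (Q + 1)).
  { apply ln_le_mono; [|lra]. assert (0 < m/T) by (apply Rdiv_lt_0_compat; lra). lra. }
  assert (hPQ : m*(ln P - ln Q) <= (1 - 1/rho)/Q).
  { rewrite <- ln_div by lra.
    pose proof (ln_le_sub1 (P/Q) ltac:(apply Rdiv_lt_0_compat; lra)).
    assert (hPQ' : P - Q <= (T-m)/(m*(T+1))).
    { unfold P, Q, rho. rewrite <- ln_div.
      pose proof (ln_le_sub1 (2*T/m/(2*((T+1)/(m+1))))).
      assert (0 < 2*T/m/(2*((T+1)/(m+1)))) by (apply Rdiv_lt_0_compat; [apply Rdiv_lt_0_compat|]; try lra; apply Rmult_lt_0_compat; [lra|apply Rdiv_lt_0_compat; lra]).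
      specialize (H0 H1).
      replace (2*T/m/(2*((T+1)/(m+1))) - 1) with ((T-m)/(m*(T+1))) in H0 by (field; lra). exact H0.
      apply Rdiv_lt_0_compat; lra. apply Rmult_lt_0_compat; [lra|apply Rdiv_lt_0_compat; lra]. }
    assert (m*(P/Q - 1) <= (1-1/rho)/Q).
    { replace (m*(P/Q-1)) with (m*(P-Q)/Q) by (field; lra).
      replace (1 - 1/rho) with ((T-m)/(T+1)) by (unfold rho; field; lra).
      unfold Rdiv at 1 3. apply Rmult_le_compat_r. apply Rlt_le, Rinv_0_lt_compat; lra.
      apply Rmult_le_compat_l with (r := m) in hPQ'; [|lra].
      replace (m*((T-m)/(m*(T+1)))) with ((T-m)/(T+1)) in hPQ' by (field; lra). exact hPQ'. }
    apply Rle_trans with (m*(P/Q-1)); [apply Rmult_le_compat_l; lra| exact H0]. }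
  pose proof (new_all rho hrho) as hF. unfold Fnew in hF. fold Q in hF.
  rewrite han, eQ, eP.
  replace (- (m + 1 - 1) * ln (m + 1) + Wf (T + 1) (m + 1) + 3 / 2 * (m + 1) * ln Q + 13 / 10 * (m + 1) - 14 / 100 -
     (- (m - 1) * ln m + Wf T m + 3 / 2 * m * ln P + 13 / 10 * m - 14 / 100))
    with ((- (m+1-1)*ln (m+1) + (m-1)*ln m) + (Wf (T+1) (m+1) - Wf T m) - 3/2*(m*(ln P - ln Q)) + 3/2*ln Q + 13/10) by ring.
  lra.
Qed.

Lemma lndiv (x y : R) : 0 < x -> 0 < y -> ln (x / y) = ln x - ln y.
Proof. apply ln_div. Qed.

End An.
Import An.
Import ListNotations.
Open Scope R_scope.

Definition sd {X : Type} (F : X -> R) (l : list X) : R := fold_right (fun j acc => F j + acc) 0 l.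

Lemma sd_perm {X : Type} (F : X -> R) (l1 l2 : list X) : Permutation l1 l2 -> sd F l1 = sd F l2.
Proof. induction 1; simpl; try lra. Qed.

Lemma sd_ext_in {X : Type} (F G : X -> R) (l : list X) : (forall x, In x l -> F x = G x) -> sd F l = sd G l.
Proof.
  induction l as [|a l IH]; simpl; intros h; [lra|].
  rewrite h by auto. rewrite IH by auto. lra.
Qed.

Lemma sd_update {X : Type} (eq_dec : forall a b : X, {a = b} + {a <> b}) (F G : X -> R) (l : list X) (a : X) :
  NoDup l -> In a l -> (forall x, x <> a -> G x = F x) -> sd G l = sd F l + G a - F a.
Proof.
  induction l as [|b l IH]; simpl; intros hnd hin h; [contradiction|].
  inversion hnd; subst.
  destruct hin as [<-|hin].
  - rewrite (sd_ext_in G F l). lra. intros x hx. apply h. intro; subst; contradiction.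
  - assert (b <> a) by (intro; subst; contradiction).
    rewrite h by auto. rewrite IH by auto. lra.
Qed.

Lemma nodup_perm {X : Type} (l1 l2 : list X) : NoDup l1 -> NoDup l2 -> (forall x, In x l1 <-> In x l2) -> Permutation l1 l2.
Proof. intros. apply NoDup_Permutation; auto. Qed.

Section Upd.
Context {X : Type} (eq_dec : forall a b : X, {a = b} + {a <> b}).

Lemma cnt_app1 (p : list X) (a j : X) : cnt X eq_dec (p ++ [a]) j = (cnt X eq_dec p j + (if eq_dec a j then 1 else 0))%nat.
Proof.
  unfold cnt. rewrite count_occ_app. simpl. destruct (eq_dec a j); lia.
Qed.

Lemma sd_nodup_app1 (G : X -> R) (H : X -> R) (p : list X) (a : X) :
  (forall x, x <> a -> H x = G x) ->
  sd H (nodup eq_dec (p ++ [a])) = sd G (nodup eq_dec p) + (if in_dec eq_dec a p then H a - G a else H a).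
Proof.
  intros hx. destruct (in_dec eq_dec a p) as [hin|hnin].
  - rewrite (sd_perm H _ (nodup eq_dec p)).
    + rewrite (sd_update eq_dec G H (nodup eq_dec p) a); [lra| apply NoDup_nodup | apply nodup_In; auto | auto].
    + apply nodup_perm; try apply NoDup_nodup. intro x. rewrite !nodup_In, in_app_iff. simpl. intuition; subst; auto.
  - rewrite (sd_perm H _ (a :: nodup eq_dec p)).
    + simpl. rewrite (sd_ext_in H G). lra. intros x hx'. apply hx. intro; subst. apply nodup_In in hx'. contradiction.
    + apply nodup_perm; try apply NoDup_nodup. constructor. rewrite nodup_In; auto. apply NoDup_nodup.
      intro x. rewrite !nodup_In, in_app_iff. simpl. rewrite nodup_In. intuition.
Qed.

Lemma mdist_app1 (p : list X) (a : X) :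
  mdist X eq_dec (p ++ [a]) = (mdist X eq_dec p + (if in_dec eq_dec a p then 0 else 1))%nat.
Proof.
  unfold mdist. destruct (in_dec eq_dec a p) as [hin|hnin].
  - rewrite (Permutation_length (l' := nodup eq_dec p)). lia.
    apply nodup_perm; try apply NoDup_nodup. intro x. rewrite !nodup_In, in_app_iff. simpl. intuition; subst; auto.
  - rewrite (Permutation_length (l' := a :: nodup eq_dec p)). simpl; lia.
    apply nodup_perm; try apply NoDup_nodup. constructor. rewrite nodup_In; auto. apply NoDup_nodup.
    intro x. rewrite !nodup_In, in_app_iff. simpl. rewrite nodup_In. intuition.
Qed.

End Upd.


Section Main.
Context {X : Type} (eq_dec : forall a b : X, {a = b} + {a <> b}).

Definition SS (f : nat -> R) (p : list X) : R := sd (fun j => f (cnt X eq_dec p j)) (nodup eq_dec p).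

Lemma cnt_pos_in (p : list X) (a : X) : In a p <-> (0 < cnt X eq_dec p a)%nat.
Proof. unfold cnt. apply count_occ_In. Qed.

Lemma SS_app1 (f : nat -> R) (p : list X) (a : X) :
  SS f (p ++ [a]) = SS f p + (if in_dec eq_dec a p then f (S (cnt X eq_dec p a)) - f (cnt X eq_dec p a) else f 1%nat).
Proof.
  unfold SS. rewrite (sd_nodup_app1 eq_dec (fun j => f (cnt X eq_dec p j)) (fun j => f (cnt X eq_dec (p ++ [a]) j))).
  - rewrite cnt_app1. destruct (eq_dec a a) as [_|]; [|congruence].
    destruct (in_dec eq_dec a p) as [hin|hnin].
    + replace (cnt X eq_dec p a + 1)%nat with (S (cnt X eq_dec p a)) by lia. reflexivity.
    + assert (cnt X eq_dec p a = 0%nat). { destruct (cnt X eq_dec p a) eqn:e; auto. exfalso. apply hnin. apply cnt_pos_in. lia. }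
      rewrite H. reflexivity.
  - intros x hx. rewrite cnt_app1. destruct (eq_dec a x); [congruence|]. f_equal. lia.
Qed.

Lemma SS_nil (f : nat -> R) : SS f [] = 0.
Proof. reflexivity. Qed.

Lemma nodup_len_le (l : list X) : (length (nodup eq_dec l) <= length l)%nat.
Proof. induction l as [|a l IH]; simpl; [lia|]. destruct (in_dec eq_dec a l); simpl; lia. Qed.

Lemma mdist_pos (l : list X) : l <> [] -> (1 <= mdist X eq_dec l)%nat.
Proof.
  intros h. destruct l as [|a l]; [congruence|]. unfold mdist.
  assert (In a (nodup eq_dec (a :: l))) by (apply nodup_In; simpl; auto).
  destruct (nodup eq_dec (a :: l)); simpl in *; [contradiction|lia].
Qed.

Lemma mdist_le (l : list X) : (mdist X eq_dec l <= length l)%nat.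
Proof. apply nodup_len_le. Qed.

Lemma sum_cnt (l : list X) : SS (fun k => INR k) l = INR (length l).
Proof.
  induction l as [|a l IH] using rev_ind; [reflexivity|].
  rewrite SS_app1, IH, length_app. simpl length. rewrite plus_INR.
  destruct (in_dec eq_dec a l); [rewrite S_INR|]; change (INR 1) with 1; lra.
Qed.

End Main.

Definition Gs (k : nat) : R := INR k + ln (INR k)/2 - 1/(12*INR k).
Definition Mk (k : nat) : R := INR k * ln (INR k).
Definition hT (t : nat) : R := - INR t - ln (INR t)/2 + 1.

Lemma sym_step (k : nat) : (1 <= k)%nat -> Mk (S k) - Mk k - ln (INR k) <= Gs (S k) - Gs k.
Proof.
  intros hk. unfold Mk, Gs. rewrite S_INR.
  assert (K : 1 <= INR k) by (apply (le_INR 1); lia).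
  pose proof (stir_hi (INR k) ltac:(lra)).
  pose proof (ln_succ_diff (INR k) ltac:(lra)).
  assert (e : (INR k + 1) * ln (INR k + 1) - INR k * ln (INR k) - ln (INR k) = (INR k + 1) * ln (1 + 1/INR k)) by
    (rewrite <- H0; ring).
  rewrite e.
  assert (e2 : INR k + 1 + ln (INR k + 1) / 2 - 1 / (12 * (INR k + 1)) - (INR k + ln (INR k) / 2 - 1 / (12 * INR k))
     = 1 + ln (1 + 1/INR k)/2 + 1/(12*INR k*(INR k + 1))) by (rewrite <- H0; field; lra).
  rewrite e2. lra.
Qed.

Lemma time_part (t : nat) : (1 <= t)%nat ->
  Mk (S t) - Mk t = (INR t + 1) * ln (1 + 1/INR t) + ln (INR t) /\
  hT (S t) - hT t = -1 - ln (1 + 1/INR t)/2 /\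
  1 <= (INR t + /2) * ln (1 + 1/INR t).
Proof.
  intros ht. assert (T1 : 1 <= INR t) by (apply (le_INR 1); lia).
  pose proof (ln_succ_diff (INR t) ltac:(lra)).
  unfold Mk, hT. rewrite S_INR. repeat split.
  - rewrite <- H. ring.
  - rewrite <- H. field.
  - apply stir_lo; lra.
Qed.

Lemma Phi_seen (T m : R) : Phi (T+1) m - Phi T m = SeenRHS T m.
Proof. unfold Phi, SeenRHS. ring. Qed.

Lemma seen_real (k t m : nat) (beta : R) : (1 <= k)%nat -> (1 <= m)%nat -> (m <= t)%nat ->
  beta = INR m / ln ((INR t + 1)/INR m) ->
  (Mk (S k) - Mk k) - (Mk (S t) - Mk t) - ln (INR k / (INR t + beta))
  <= (Gs (S k) - Gs k) + (hT (S t) - hT t) + (Phi (INR t + 1) (INR m) - Phi (INR t) (INR m)).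
Proof.
  intros hk hm hmt hb.
  assert (T1 : 1 <= INR t) by (apply (le_INR 1); lia).
  assert (M1 : 1 <= INR m) by (apply (le_INR 1); lia).
  assert (MT : INR m <= INR t) by (apply le_INR; lia).
  assert (K1 : 1 <= INR k) by (apply (le_INR 1); lia).
  destruct (time_part t ltac:(lia)) as [e1 [e2 e3]].
  pose proof (sym_step k hk).
  pose proof (seen_step t m hm hmt) as hs.
  rewrite Phi_seen.
  assert (hL : 0 < ln ((INR t + 1)/INR m)) by (apply ln_pos_gt1; apply lt_div1; lra).
  assert (hbp : 0 < beta) by (rewrite hb; apply Rdiv_lt_0_compat; lra).
  assert (eA : AS (INR t) (INR m) = ln (INR t + beta) - ln (INR t)).
  { unfold AS. rewrite <- hb. rewrite <- lndiv by lra. f_equal. field. lra. }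
  rewrite lndiv by lra.
  assert (0 <= ln (1 + 1/INR t)) by (apply Rlt_le, ln_pos_gt1; assert (0 < 1/INR t) by (apply Rdiv_lt_0_compat; lra); lra).
  nra.
Qed.

Lemma Gs1 : Gs 1 = 11/12.
Proof. unfold Gs. simpl. rewrite ln_1. field. Qed.
Lemma Mk1 : Mk 1 = 0.
Proof. unfold Mk. simpl. rewrite ln_1. ring. Qed.

Lemma new_real (t m : nat) (beta w : R) : (1 <= m)%nat -> (m <= t)%nat -> 0 < w ->
  beta = INR m / ln ((INR t + 1)/INR m) ->
  - (Mk (S t) - Mk t) - ln (beta * w / (INR t + beta)) - ln (/ w)
  <= Gs 1 + (hT (S t) - hT t) + (Phi (INR t + 1) (INR m + 1) - Phi (INR t) (INR m)).
Proof.
  intros hm hmt hw hb.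
  assert (T1 : 1 <= INR t) by (apply (le_INR 1); lia).
  assert (M1 : 1 <= INR m) by (apply (le_INR 1); lia).
  assert (MT : INR m <= INR t) by (apply le_INR; lia).
  destruct (time_part t ltac:(lia)) as [e1 [e2 e3]].
  pose proof (new_step_R (INR t) (INR m) M1 MT) as hn.
  assert (hL : 0 < ln ((INR t + 1)/INR m)) by (apply ln_pos_gt1; apply lt_div1; lra).
  assert (hbp : 0 < beta) by (rewrite hb; apply Rdiv_lt_0_compat; lra).
  assert (eA : ln (ln ((INR t + 1)/INR m)/INR m + 1/INR t) = ln (INR t + beta) - ln (INR t) - ln beta).
  { rewrite <- !lndiv by (try apply Rdiv_lt_0_compat; lra). f_equal. rewrite hb. field. lra. }
  rewrite Gs1.
  rewrite lndiv by (try apply Rmult_lt_0_compat; lra). rewrite ln_mult by lra. rewrite ln_Rinv by lra.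
  assert (0 <= ln (1 + 1/INR t)) by (apply Rlt_le, ln_pos_gt1; assert (0 < 1/INR t) by (apply Rdiv_lt_0_compat; lra); lra).
  nra.
Qed.

Section Ind.
Context {X : Type} (eq_dec : forall a b : X, {a = b} + {a <> b}) (u : X -> R) (v : nat -> R)
  (Hu : forall i, 0 < u i) (Hv : forall k, 0 < v k).

Definition MLu (p : list X) : R := SS eq_dec Mk p - Mk (length p).
Definition Vp (p : list X) : R :=
  SS eq_dec Gs p + hT (length p) + Phi (INR (length p)) (INR (mdist X eq_dec p)).

Lemma wt_pos (p : list X) (a : X) : 0 < wt X eq_dec u v p a.
Proof. unfold wt. apply Rmult_lt_0_compat; auto. Qed.

Lemma firstn_prefix (p rest xs : list X) : p ++ rest = xs -> firstn (length p) xs = p.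
Proof. intros <-. rewrite firstn_app, Nat.sub_diag, firstn_O, app_nil_r, firstn_all. reflexivity. Qed.

Lemma betastar_pos (b0 : R) (xs : list X) : 0 < b0 -> xs <> [] -> forall t, 0 < betastar X eq_dec b0 xs t.
Proof.
  intros hb hxs t. destruct t as [|t']; [exact hb|].
  set (q := firstn (S t') xs).
  change (betastar X eq_dec b0 xs (S t')) with (INR (mdist X eq_dec q) / ln ((INR (S t') + 1) / INR (mdist X eq_dec q))).
  assert (hq : q <> []).
  { unfold q. destruct xs; [congruence|]. simpl. discriminate. }
  pose proof (mdist_pos eq_dec q hq).
  pose proof (mdist_le eq_dec q).
  assert (length q <= S t')%nat by (unfold q; rewrite length_firstn; lia).
  assert (M1 : 1 <= INR (mdist X eq_dec q)) by (apply (le_INR 1); lia).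
  assert (MT : INR (mdist X eq_dec q) <= INR (S t')) by (apply le_INR; lia).
  apply Rdiv_lt_0_compat; [lra|]. apply ln_pos_gt1. apply lt_div1; lra.
Qed.

Lemma Scond_pos (beta : nat -> R) (p : list X) (a : X) : (forall t, 0 < beta t) -> 0 < Scond X eq_dec u v beta p a.
Proof.
  intros hb. unfold Scond. pose proof (pos_INR (length p)). pose proof (hb (length p)).
  destruct (0 <? cnt X eq_dec p a) eqn:e.
  - apply Nat.ltb_lt in e. apply Rdiv_lt_0_compat; [apply lt_0_INR; lia|lra].
  - apply Rdiv_lt_0_compat; [apply Rmult_lt_0_compat; [lra|apply wt_pos]|lra].
Qed.

Lemma Saux_pos (beta : nat -> R) (rest p : list X) : (forall t, 0 < beta t) -> 0 < Saux X eq_dec u v beta p rest.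
Proof.
  intros hb. revert p. induction rest as [|a r IH]; intros p; simpl; [lra|].
  apply Rmult_lt_0_compat; [apply Scond_pos; auto|apply IH].
Qed.

Lemma main_ind (b0 : R) (xs : list X) : 0 < b0 -> xs <> [] ->
  forall rest p, p <> [] -> p ++ rest = xs ->
  MLu (p ++ rest) - MLu p - ln (Saux X eq_dec u v (betastar X eq_dec b0 xs) p rest) - CLaux X eq_dec u v p rest
  <= Vp (p ++ rest) - Vp p.
Proof.
  intros hb0 hxs. set (beta := betastar X eq_dec b0 xs).
  assert (hbp : forall t, 0 < beta t) by (apply betastar_pos; auto).
  induction rest as [|a r IH]; intros p hp hpr.
  { simpl. rewrite app_nil_r, ln_1. lra. }
  simpl Saux. simpl CLaux.
  specialize (IH (p ++ [a]) ltac:(destruct p; simpl; congruence) ltac:(rewrite <- app_assoc; exact hpr)).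
  rewrite <- app_assoc in IH. simpl in IH.
  rewrite ln_mult by (try apply Scond_pos; try apply Saux_pos; auto).
  enough (MLu (p ++ [a]) - MLu p - ln (Scond X eq_dec u v beta p a) -
     (if in_dec eq_dec a p then 0 else ln (/ wt X eq_dec u v p a)) <= Vp (p ++ [a]) - Vp p) by lra.
  set (t := length p). set (m := mdist X eq_dec p).
  assert (ht : (1 <= t)%nat) by (unfold t; destruct p; [congruence|simpl; lia]).
  assert (hm : (1 <= m)%nat) by (apply mdist_pos; auto).
  assert (hmt : (m <= t)%nat) by (apply mdist_le).
  assert (hbt : beta t = INR m / ln ((INR t + 1)/INR m)).
  { unfold beta, betastar. destruct t as [|t'] eqn:et; [lia|].
    rewrite <- et. assert (hf : firstn t xs = p) by exact (firstn_prefix p (a :: r) xs hpr).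
    rewrite hf. reflexivity. }
  unfold MLu, Vp. rewrite !SS_app1. rewrite mdist_app1. rewrite length_app. simpl length.
  replace (length p + 1)%nat with (S t) by (unfold t; lia). fold t. fold m.
  unfold Scond. fold t.
  destruct (in_dec eq_dec a p) as [hin|hnin].
  - set (k := cnt X eq_dec p a).
    assert (hk : (1 <= k)%nat) by (apply (cnt_pos_in eq_dec) in hin; unfold k; lia).
    assert (e : (0 <? k)%nat = true) by (apply Nat.ltb_lt; lia). rewrite e.
    rewrite Nat.add_0_r.
    pose proof (seen_real k t m (beta t) hk hm hmt hbt). rewrite S_INR.
    lra.
  - assert (e0 : cnt X eq_dec p a = 0%nat).
    { destruct (cnt X eq_dec p a) eqn:e; auto. exfalso. apply hnin. apply (cnt_pos_in eq_dec). lia. }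
    rewrite e0. assert (e1 : (0 <? 0)%nat = false) by reflexivity. rewrite e1. cbv iota.
    pose proof (new_real t m (beta t) (wt X eq_dec u v p a) hm hmt (wt_pos p a) hbt).
    rewrite plus_INR, S_INR. change (INR 1) with 1. rewrite Mk1.
    lra.
Qed.

End Ind.

Section Fin.
Context {X : Type} (eq_dec : forall a b : X, {a = b} + {a <> b}).

Lemma ln_prod (c : X -> nat) (l : list X) : (forall j, In j l -> (1 <= c j)%nat) ->
  0 < fold_right (fun j acc => INR (c j) ^ (c j) * acc) 1 l /\
  ln (fold_right (fun j acc => INR (c j) ^ (c j) * acc) 1 l) = sd (fun j => INR (c j) * ln (INR (c j))) l.
Proof.
  induction l as [|a l IH]; intros h; simpl.
  - split; [lra|apply ln_1].
  - destruct IH as [h1 h2]. intros; apply h; simpl; auto.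
    assert (ha : 1 <= INR (c a)) by (apply (le_INR 1); apply h; simpl; auto).
    assert (0 < INR (c a) ^ c a) by (apply pow_lt; lra).
    split. apply Rmult_lt_0_compat; lra.
    rewrite ln_mult by lra. rewrite ln_pow by lra. rewrite h2. reflexivity.
Qed.

Lemma ML_eq (xs : list X) : xs <> [] -> ML X eq_dec xs = MLu eq_dec xs.
Proof.
  intros hxs. unfold ML, MLu, SS, Mk.
  assert (hn : 1 <= INR (length xs)) by (apply (le_INR 1); destruct xs; [congruence|simpl; lia]).
  destruct (ln_prod (cnt X eq_dec xs) (nodup eq_dec xs)) as [h1 h2].
  { intros j hj. apply nodup_In in hj. apply (cnt_pos_in eq_dec) in hj. lia. }
  assert (0 < INR (length xs) ^ length xs) by (apply pow_lt; lra).
  rewrite ln_mult; [| |exact h1].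
  - rewrite h2. rewrite ln_Rinv by lra. rewrite ln_pow by lra. unfold sd. ring.
  - apply Rinv_0_lt_compat; lra.
Qed.

End Fin.

Lemma sd_le {X : Type} (F G : X -> R) (l : list X) : (forall x, In x l -> F x <= G x) -> sd F l <= sd G l.
Proof. induction l as [|a l IH]; simpl; intros h; [lra|]. pose proof (h a (or_introl eq_refl)). pose proof (IH (fun x hx => h x (or_intror hx))). lra. Qed.

Lemma sd_plus {X : Type} (F G : X -> R) (l : list X) : sd (fun x => F x + G x) l = sd F l + sd G l.
Proof. induction l as [|a l IH]; simpl; [lra|]. rewrite IH. lra. Qed.

Lemma Wf_le (n M : R) : 0 < M -> M <= n -> Wf n M <= M.
Proof.
  intros hM hn. unfold Wf. destruct (Req_dec n M) as [->|hne]. { replace (M - M) with 0 by ring. lra. }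
  pose proof (ln_le_sub1 (n/(n-M)) ltac:(apply Rdiv_lt_0_compat; lra)).
  apply Rmult_le_compat_l with (r := n - M) in H; [|lra].
  replace ((n-M)*(n/(n-M) - 1)) with M in H by (field; lra). lra.
Qed.

Section Fin2.
Context {X : Type} (eq_dec : forall a b : X, {a = b} + {a <> b}).

Lemma Vp_init (a : X) : 0 <= Vp eq_dec [a].
Proof.
  unfold Vp, SS. simpl nodup. simpl sd. unfold cnt. simpl count_occ.
  destruct (eq_dec a a) as [_|]; [|congruence]. unfold mdist. simpl nodup. simpl length.
  rewrite Gs1. unfold hT, Phi, Wf, LL. simpl INR. rewrite ln_1.
  replace (2*1/1) with 2 by field.
  pose proof ln2_bounds.
  pose proof (ln_ge_1minv (ln 2) ltac:(lra)).
  assert (/ ln 2 <= / (6929/10000)) by (apply Rinv_le_contravar; lra).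
  replace ((1-1) * ln (1/(1-1))) with 0 by ring.
  lra.
Qed.

Lemma Vp_final (xs : list X) : xs <> [] ->
  let n := INR (length xs) in let M := INR (mdist X eq_dec xs) in
  Vp eq_dec xs <= - (M - 1) * ln M + sum_half_ln_counts X eq_dec xs - /2 * ln n
     + 3/2 * M * ln (ln (2*n/M)) + 233/100 * M + 86/100.
Proof.
  intros hxs n M.
  assert (hM1 : 1 <= M) by (apply (le_INR 1); apply mdist_pos; auto).
  assert (hMn : M <= n) by (apply le_INR; apply mdist_le).
  unfold Vp. fold n M.
  assert (hS : SS eq_dec Gs xs <= n + sum_half_ln_counts X eq_dec xs).
  { assert (e := sum_cnt eq_dec xs). fold n in e. rewrite <- e. unfold SS, sum_half_ln_counts.
    change (fold_right (fun j acc => / 2 * ln (INR (cnt X eq_dec xs j)) + acc) 0 (nodup eq_dec xs))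
      with (sd (fun j => / 2 * ln (INR (cnt X eq_dec xs j))) (nodup eq_dec xs)).
    rewrite <- sd_plus. apply sd_le. intros j hj.
    apply nodup_In in hj. apply (cnt_pos_in eq_dec) in hj.
    assert (1 <= INR (cnt X eq_dec xs j)) by (apply (le_INR 1); lia).
    unfold Gs. assert (0 < 1/(12*INR (cnt X eq_dec xs j))) by (apply Rdiv_lt_0_compat; lra). lra. }
  unfold hT, Phi. fold n.
  pose proof (Wf_le n M ltac:(lra) hMn).
  unfold LL. lra.
Qed.

End Fin2.

Section Assemble.
Context {X : Type} (eq_dec : forall a b : X, {a = b} + {a <> b}) (u : X -> R) (v : nat -> R)
  (Hu : forall i, 0 < u i) (Hv : forall k, 0 < v k).

Lemma Scond_first (beta : nat -> R) (a : X) : 0 < beta 0%nat ->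
  Scond X eq_dec u v beta [] a = wt X eq_dec u v [] a.
Proof.
  intros hb. unfold Scond. simpl length. unfold cnt. simpl count_occ.
  assert (e1 : (0 <? 0)%nat = false) by reflexivity. rewrite e1. cbv iota. simpl INR.
  field. lra.
Qed.

Lemma regret_star (b0 : R) (xs : list X) : 0 < b0 -> xs <> [] ->
  regret X eq_dec u v (betastar X eq_dec b0 xs) xs <= CL X eq_dec u v xs + Vp eq_dec xs.
Proof.
  intros hb0 hxs. assert (exists a r, xs = a :: r) as [a [r exs]] by (destruct xs; [congruence| eauto]).
  unfold regret. rewrite ML_eq by (rewrite exs; discriminate).
  pose proof (main_ind eq_dec u v Hu Hv b0 xs hb0 hxs r [a] ltac:(discriminate) ltac:(rewrite exs; reflexivity)) as hm.
  replace ([a] ++ r) with xs in hm by (rewrite exs; reflexivity).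
  assert (hbp := betastar_pos eq_dec b0 xs hb0 hxs).
  set (bs := betastar X eq_dec b0 xs) in *.
  assert (eS : Sprob X eq_dec u v bs xs = Scond X eq_dec u v bs [] a * Saux X eq_dec u v bs [a] r)
    by (unfold Sprob; rewrite exs; reflexivity).
  assert (eC : CL X eq_dec u v xs = ln (/ wt X eq_dec u v [] a) + CLaux X eq_dec u v [a] r)
    by (unfold CL; rewrite exs; reflexivity).
  rewrite eS, eC.
  rewrite Scond_first by apply hbp.
  assert (hw := wt_pos eq_dec u v Hu Hv [] a).
  rewrite ln_mult by (try apply Saux_pos; auto).
  rewrite ln_Rinv by lra.
  assert (hMa : MLu eq_dec [a] = 0).
  { unfold MLu, SS, cnt. simpl nodup. simpl sd. simpl count_occ. destruct (eq_dec a a); [|congruence].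
    simpl length. rewrite Mk1. ring. }
  pose proof (Vp_init eq_dec a).
  simpl app in hm. lra.
Qed.

Lemma betac_pos (b0 : R) (c : nat -> R) (xs : list X) : 0 < b0 -> xs <> [] ->
  (forall t : nat, (1 <= t)%nat -> 1 <= c t <= 2) -> forall t, 0 < betac X eq_dec b0 c xs t.
Proof.
  intros hb hxs hc t. destruct t as [|t']; [exact hb|].
  change (betac X eq_dec b0 c xs (S t')) with (betastar X eq_dec b0 xs (S t') / c (S t')).
  apply Rdiv_lt_0_compat. apply betastar_pos; auto. specialize (hc (S t') ltac:(lia)). lra.
Qed.

Lemma part1_ind (b0 : R) (c : nat -> R) (xs : list X) : 0 < b0 -> xs <> [] ->
  (forall t : nat, (1 <= t)%nat -> 1 <= c t <= 2) ->
  forall rest p, p <> [] ->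
  ln (Saux X eq_dec u v (betastar X eq_dec b0 xs) p rest) - ln (Saux X eq_dec u v (betac X eq_dec b0 c xs) p rest)
  <= ln 2 * (INR (mdist X eq_dec (p ++ rest)) - INR (mdist X eq_dec p)).
Proof.
  intros hb0 hxs hc. set (bs := betastar X eq_dec b0 xs). set (bc := betac X eq_dec b0 c xs).
  assert (hbs : forall t, 0 < bs t) by (apply betastar_pos; auto).
  assert (hbc : forall t, 0 < bc t) by (apply betac_pos; auto).
  induction rest as [|a r IH]; intros p hp.
  { simpl. rewrite app_nil_r. lra. }
  simpl Saux. rewrite !ln_mult by (try apply Scond_pos; try apply Saux_pos; auto).
  specialize (IH (p ++ [a]) ltac:(destruct p; simpl; congruence)).
  rewrite <- app_assoc in IH. simpl app in IH.
  rewrite mdist_app1 in IH. rewrite plus_INR in IH.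
  set (t := length p).
  assert (ht : (1 <= t)%nat) by (unfold t; destruct p; [congruence|simpl; lia]).
  assert (hct : 1 <= c t <= 2) by (apply hc; auto).
  assert (ebc : bc t = bs t / c t).
  { unfold bc, bs. destruct t as [|t'] eqn:et; [lia|]. reflexivity. }
  pose proof (hbs t). pose proof (pos_INR t).
  assert (hle : bc t <= bs t).
  { rewrite ebc. apply divR_le; [lra|]. nra. }
  assert (bc t > 0) by apply hbc.
  enough (ln (Scond X eq_dec u v bs p a) - ln (Scond X eq_dec u v bc p a) <=
          ln 2 * (if in_dec eq_dec a p then 0 else 1)) by (destruct (in_dec eq_dec a p); simpl INR in *; lra).
  unfold Scond. fold t.
  destruct (in_dec eq_dec a p) as [hin|hnin].
  - apply (cnt_pos_in eq_dec) in hin.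
    assert (e : (0 <? cnt X eq_dec p a)%nat = true) by (apply Nat.ltb_lt; lia). rewrite e.
    assert (0 < INR (cnt X eq_dec p a)) by (apply lt_0_INR; lia).
    rewrite !lndiv by lra.
    assert (ln (INR t + bc t) <= ln (INR t + bs t)) by (apply ln_le_mono; lra). lra.
  - assert (e0 : cnt X eq_dec p a = 0%nat).
    { destruct (cnt X eq_dec p a) eqn:e; auto. exfalso. apply hnin. apply (cnt_pos_in eq_dec). lia. }
    rewrite e0. assert (e1 : (0 <? 0)%nat = false) by reflexivity. rewrite e1. cbv iota.
    assert (hw := wt_pos eq_dec u v Hu Hv p a).
    rewrite !lndiv by (try apply Rmult_lt_0_compat; lra).
    rewrite !ln_mult by lra.
    assert (ln (INR t + bc t) <= ln (INR t + bs t)) by (apply ln_le_mono; lra).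
    assert (ln (bs t) - ln (bc t) <= ln 2).
    { rewrite <- lndiv by lra. apply ln_le_mono. apply Rdiv_lt_0_compat; lra.
      rewrite ebc. replace (bs t / (bs t / c t)) with (c t) by (field; lra). lra. }
    lra.
Qed.

Lemma part1 (b0 : R) (c : nat -> R) (xs : list X) : 0 < b0 -> xs <> [] ->
  (forall t : nat, (1 <= t)%nat -> 1 <= c t <= 2) ->
  regret X eq_dec u v (betac X eq_dec b0 c xs) xs
    <= regret X eq_dec u v (betastar X eq_dec b0 xs) xs + (INR (mdist X eq_dec xs) - 1) * ln 2.
Proof.
  intros hb0 hxs hc. assert (exists a r, xs = a :: r) as [a [r exs]] by (destruct xs; [congruence| eauto]).
  pose proof (part1_ind b0 c xs hb0 hxs hc r [a] ltac:(discriminate)) as h.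
  replace ([a] ++ r) with xs in h by (rewrite exs; reflexivity).
  assert (hbs := betastar_pos eq_dec b0 xs hb0 hxs).
  assert (hbc := betac_pos b0 c xs hb0 hxs hc).
  set (bs := betastar X eq_dec b0 xs) in *. set (bc := betac X eq_dec b0 c xs) in *.
  assert (eS : forall be, Sprob X eq_dec u v be xs = Scond X eq_dec u v be [] a * Saux X eq_dec u v be [a] r)
    by (intros; unfold Sprob; rewrite exs; reflexivity).
  unfold regret. rewrite !eS.
  rewrite !Scond_first by (try apply hbs; try apply hbc).
  assert (hw := wt_pos eq_dec u v Hu Hv [] a).
  rewrite !ln_mult by (try apply Saux_pos; auto).
  assert (INR (mdist X eq_dec [a]) = 1) by reflexivity.
  rewrite H in h. rewrite (Rmult_comm (INR (mdist X eq_dec xs) - 1)). lra.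
Qed.

End Assemble.

Theorem mainTheorem7
  (X : Type) (eq_dec : forall a b : X, {a = b} + {a <> b})
  (enumX : list X) (HnodupX : NoDup enumX) (HfullX : forall x : X, In x enumX)
  (u : X -> R) (v : nat -> R)
  (Hu : forall i, 0 < u i) (Hv : forall k, 0 < v k)
  (Hw : forall p : list X, unseen_weight X eq_dec u v enumX p <= 1)
  (b0 : R) (Hb0 : 0 < b0)
  (c : nat -> R) (Hc : forall t : nat, (1 <= t)%nat -> 1 <= c t <= 2)
  (xs : list X) (Hn : (1 <= length xs)%nat) :
  let n := INR (length xs) in
  let m := INR (mdist X eq_dec xs) in
  regret X eq_dec u v (betac X eq_dec b0 c xs) xs
    <= regret X eq_dec u v (betastar X eq_dec b0 xs) xs + (m - 1) * ln 2
  /\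
  regret X eq_dec u v (betac X eq_dec b0 c xs) xs
    <= CL X eq_dec u v xs - (m - 1) * ln m + sum_half_ln_counts X eq_dec xs
       - / 2 * ln n + 3 / 2 * m * ln (ln (2 * n / m)) + 233 / 100 * m + 86 / 100
       + (m - 1) * ln 2.
Proof.
  intros n m.
  assert (hxs : xs <> []) by (destruct xs; simpl in Hn; [lia|discriminate]).
  pose proof (part1 eq_dec u v Hu Hv b0 c xs Hb0 hxs Hc) as h1.
  pose proof (regret_star eq_dec u v Hu Hv b0 xs Hb0 hxs) as h2.
  pose proof (Vp_final eq_dec xs hxs) as h3. cbv zeta in h3.
  unfold n, m. split; lra.
Qed.
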